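(* Let $\mu_\xi,\mu_\rho\in\mathbb{R}$, $\sigma_\xi>0$, $\sigma_\rho>0$, and $\kappa_\rho=\mu_\rho+\sigma_\rho^2/2$. Let $\delta>0$. The equation $$(\sigma_\xi^2+\sigma_\rho^2x^2)f''(x)+2(\mu_\xi+\kappa_\rho x)f'(x)-2\delta f(x)=0$$ admits a solution $f:\mathbb{R}_+\to\mathbb{R}$ satisfying property (P): $f(x)>0$ for all $x\in\mathbb{R}_+$ and $f'(x)\le0$ for all $x\in(0,\infty)$. Moreover, if $\mu_\rho\le0$, every other solution $\tilde f$ of this equation satisfying (P) is of the form $\tilde f=Kf$ on $\mathbb{R}_+$ for some constant $K>0$.
   Context: $\mathbb{R}_+=[0,\infty)$. *)

(* Defs.v *)
From Stdlib Require Import Reals Lra.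
Open Scope R_scope.

(* Derivative of f at x within R_+ = [0, +oo): l is the limit of
   (f y - f x)/(y - x) as y -> x with y in R_+, y <> x.
   At x = 0 this is the right derivative; at x > 0 the usual derivative. *)
Definition deriv_Rplus (f : R -> R) (x l : R) : Prop :=
  forall eps : R, 0 < eps -> exists dlt : R, 0 < dlt /\
    forall y : R, 0 <= y -> y <> x -> Rabs (y - x) < dlt ->
      Rabs ((f y - f x) / (y - x) - l) < eps.

(* f : R_+ -> R (values of f on negative reals are irrelevant) is a solution
   on R_+ of
   (s_xi^2 + s_rho^2 x^2) f''(x) + 2 (mu_xi + kappa_rho x) f'(x) - 2 delta f(x) = 0,
   with kappa_rho = mu_rho + s_rho^2/2; f1, f2 are f', f''. *)
Definition is_solution (mu_xi mu_rho s_xi s_rho delta : R) (f : R -> R) : Prop :=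
  exists f1 f2 : R -> R,
    forall x : R, 0 <= x ->
      deriv_Rplus f x (f1 x) /\ deriv_Rplus f1 x (f2 x) /\
      (s_xi ^ 2 + s_rho ^ 2 * x ^ 2) * f2 x
        + 2 * (mu_xi + (mu_rho + s_rho ^ 2 / 2) * x) * f1 x
        - 2 * delta * f x = 0.

Definition propP (f : R -> R) : Prop :=
  (forall x : R, 0 <= x -> 0 < f x) /\
  (forall x l : R, 0 < x -> deriv_Rplus f x l -> l <= 0).

(* Main.v *)
Require Import Defs.
From Stdlib Require Import Reals Lra.
From Coquelicot Require Import Coquelicot.
Open Scope R_scope.

Lemma dR_of_dpl f x l : derivable_pt_lim f x l -> deriv_Rplus f x l.
Proof.
  intros H eps Heps. destruct (H eps Heps) as [d Hd].
  exists d; split; [apply cond_pos|]. intros y _ Hyx Hy.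
  assert (Hh : y - x <> 0) by lra.
  specialize (Hd (y - x) Hh Hy). replace (x + (y - x)) with y in Hd by ring.
  exact Hd.
Qed.

Lemma dR_to_dpl f x l : 0 < x -> deriv_Rplus f x l -> derivable_pt_lim f x l.
Proof.
  intros Hx H eps Heps. destruct (H eps Heps) as [d [Hd H1]].
  assert (Hm : 0 < Rmin d x) by (apply Rmin_pos; lra).
  exists (mkposreal _ Hm). intros h Hh Hhl. simpl in Hhl.
  assert (Hy : Rabs h < d /\ Rabs h < x).
  { split; eapply Rlt_le_trans; try apply Hhl; [apply Rmin_l|apply Rmin_r]. }
  destruct Hy as [Hy1 Hy2].
  assert (0 <= x + h) by (apply Rabs_def2 in Hy2; lra).
  specialize (H1 (x + h) H0).
  replace (x + h - x) with h in H1 by ring. apply H1; auto.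
  intro E. apply Hh. lra.
Qed.

Lemma dR_lin f g x l1 l2 al be :
  deriv_Rplus f x l1 -> deriv_Rplus g x l2 ->
  deriv_Rplus (fun t => al * f t + be * g t) x (al * l1 + be * l2).
Proof.
  intros Hf Hg eps Heps.
  set (M := Rabs al + Rabs be + 1).
  assert (HM : 0 < M) by (unfold M; pose proof (Rabs_pos al); pose proof (Rabs_pos be); lra).
  assert (He : 0 < eps / M) by (apply Rdiv_lt_0_compat; lra).
  destruct (Hf _ He) as [d1 [Hd1 H1]]. destruct (Hg _ He) as [d2 [Hd2 H2]].
  exists (Rmin d1 d2); split; [apply Rmin_pos; lra|].
  intros y Hy Hyx Hyd.
  assert (A1 : Rabs (y - x) < d1) by (eapply Rlt_le_trans; [apply Hyd|apply Rmin_l]).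
  assert (A2 : Rabs (y - x) < d2) by (eapply Rlt_le_trans; [apply Hyd|apply Rmin_r]).
  specialize (H1 y Hy Hyx A1). specialize (H2 y Hy Hyx A2).
  assert (Hne : y - x <> 0) by lra.
  replace ((al * f y + be * g y - (al * f x + be * g x)) / (y - x) - (al * l1 + be * l2))
    with (al * ((f y - f x) / (y - x) - l1) + be * ((g y - g x) / (y - x) - l2))
    by (field; auto).
  eapply Rle_lt_trans; [apply Rabs_triang|]. rewrite !Rabs_mult.
  apply Rle_lt_trans with (Rabs al * (eps / M) + Rabs be * (eps / M)).
  { apply Rplus_le_compat; apply Rmult_le_compat_l; try apply Rabs_pos; lra. }
  replace (Rabs al * (eps / M) + Rabs be * (eps / M)) with (eps * ((Rabs al + Rabs be) / M))
    by (field; lra).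
  rewrite <- (Rmult_1_r eps) at 2. apply Rmult_lt_compat_l; auto.
  apply Rmult_lt_reg_r with M; auto.
  replace ((Rabs al + Rabs be) / M * M) with (Rabs al + Rabs be) by (field; lra).
  unfold M; lra.
Qed.

Lemma dR_cont f x l : deriv_Rplus f x l ->
  forall eps, 0 < eps -> exists d, 0 < d /\ forall y, 0 <= y -> Rabs (y - x) < d -> Rabs (f y - f x) < eps.
Proof.
  intros H eps Heps. destruct (H 1 Rlt_0_1) as [d [Hd H1]].
  set (M := Rabs l + 1).
  assert (HM : 0 < M) by (unfold M; pose proof (Rabs_pos l); lra).
  exists (Rmin d (eps / M)); split.
  { apply Rmin_pos; auto. apply Rdiv_lt_0_compat; lra. }
  intros y Hy Hyd.
  destruct (Req_dec y x) as [->|Hyx]. { rewrite Rminus_eq_0, Rabs_R0; auto. }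
  assert (A1 : Rabs (y - x) < d) by (eapply Rlt_le_trans; [apply Hyd|apply Rmin_l]).
  assert (A2 : Rabs (y - x) < eps / M) by (eapply Rlt_le_trans; [apply Hyd|apply Rmin_r]).
  specialize (H1 y Hy Hyx A1).
  assert (Hne : y - x <> 0) by lra.
  assert (Hq : Rabs ((f y - f x) / (y - x)) <= M).
  { replace ((f y - f x) / (y - x)) with (((f y - f x) / (y - x) - l) + l) by ring.
    eapply Rle_trans; [apply Rabs_triang|]. unfold M; lra. }
  replace (f y - f x) with ((f y - f x) / (y - x) * (y - x)) by (field; auto).
  rewrite Rabs_mult.
  apply Rle_lt_trans with (M * Rabs (y - x)).
  { apply Rmult_le_compat_r; auto. apply Rabs_pos. }
  apply Rmult_lt_reg_l with (/ M). { apply Rinv_0_lt_compat; auto. }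
  rewrite <- Rmult_assoc, Rinv_l by lra. rewrite Rmult_1_l.
  rewrite Rmult_comm. exact A2.
Qed.

Lemma dR_ext f g x l : deriv_Rplus f x l -> (forall y, f y = g y) -> deriv_Rplus g x l.
Proof.
  intros H E e He. destruct (H e He) as [d [Hd H1]]. exists d; split; auto.
  intros y Hy1 Hy2 Hy3. rewrite <- !E. auto.
Qed.

Lemma dpl_pos_right f x l : derivable_pt_lim f x l -> 0 < l ->
  exists d, 0 < d /\ forall h, 0 < h < d -> f x < f (x + h).
Proof.
  intros H Hl. destruct (H l Hl) as [d Hd]. exists d; split; [apply cond_pos|].
  intros h Hh. assert (Hh0 : h <> 0) by lra.
  assert (Hha : Rabs h < d) by (rewrite Rabs_right; lra).
  specialize (Hd h Hh0 Hha). apply Rabs_def2 in Hd. destruct Hd as [_ Hd].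
  assert (0 < (f (x + h) - f x) / h) by lra.
  assert (0 < f (x + h) - f x); [|lra].
  replace (f (x + h) - f x) with ((f (x + h) - f x) / h * h) by (field; lra).
  apply Rmult_lt_0_compat; lra.
Qed.

Lemma dpl_neg_left f x l : derivable_pt_lim f x l -> l < 0 ->
  exists d, 0 < d /\ forall h, 0 < h < d -> f x < f (x - h).
Proof.
  intros H Hl. destruct (H (- l) ltac:(lra)) as [d Hd]. exists d; split; [apply cond_pos|].
  intros h Hh. assert (Hh0 : - h <> 0) by lra.
  assert (Hha : Rabs (- h) < d) by (rewrite Rabs_left; lra).
  specialize (Hd (- h) Hh0 Hha). apply Rabs_def2 in Hd. destruct Hd as [Hd _].
  replace (x + - h) with (x - h) in Hd by ring.
  assert ((f (x - h) - f x) / - h < 0) by lra.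
  assert (0 < f (x - h) - f x); [|lra].
  replace (f (x - h) - f x) with (- ((f (x - h) - f x) / - h * h)) by (field; lra).
  assert ((f (x - h) - f x) / - h * h < 0); [|lra].
  apply Rmult_neg_pos; lra.
Qed.

Lemma dpl_locmax f x l d0 : derivable_pt_lim f x l -> 0 < d0 ->
  (forall y, Rabs (y - x) < d0 -> f y <= f x) -> l = 0.
Proof.
  intros H Hd0 Hm.
  destruct (Rtotal_order l 0) as [Hl|[Hl|Hl]]; auto.
  - destruct (dpl_neg_left f x l H Hl) as [d [Hd Hf]].
    set (h := Rmin d d0 / 2).
    assert (Hh : 0 < h < d /\ h < d0).
    { unfold h. pose proof (Rmin_l d d0). pose proof (Rmin_r d d0).
      assert (0 < Rmin d d0) by (apply Rmin_pos; lra). lra. }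
    specialize (Hf h ltac:(lra)). specialize (Hm (x - h)).
    assert (Rabs (x - h - x) < d0) by (replace (x - h - x) with (- h) by ring; rewrite Rabs_Ropp, Rabs_right; lra).
    specialize (Hm H0). lra.
  - destruct (dpl_pos_right f x l H Hl) as [d [Hd Hf]].
    set (h := Rmin d d0 / 2).
    assert (Hh : 0 < h < d /\ h < d0).
    { unfold h. pose proof (Rmin_l d d0). pose proof (Rmin_r d d0).
      assert (0 < Rmin d d0) by (apply Rmin_pos; lra). lra. }
    specialize (Hf h ltac:(lra)). specialize (Hm (x + h)).
    assert (Rabs (x + h - x) < d0) by (replace (x + h - x) with h by ring; rewrite Rabs_right; lra).
    specialize (Hm H0). lra.
Qed.

Lemma Zder (A x : R) : 0 <= x ->
  derivable_pt_lim (fun t => A + ln (1 + t)) x (/ (1 + x)) /\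
  derivable_pt_lim (fun t => / (1 + t)) x (- / (1 + x) ^ 2).
Proof.
  intros Hx. split; apply is_derive_Reals.
  - auto_derive; [lra|]. field; lra.
  - auto_derive; [lra|]. field; lra.
Qed.

Lemma maxp (a b c k d : R) (W W1 W2 : R -> R) (B : R) :
  0 < a -> 0 <= b -> 0 < d ->
  (forall x, 0 <= x -> deriv_Rplus W x (W1 x) /\ deriv_Rplus W1 x (W2 x) /\
     (a + b * x ^ 2) * W2 x + 2 * (c + k * x) * W1 x - 2 * d * W x = 0) ->
  W 0 = 0 -> (forall x, 0 <= x -> W x <= B) -> forall x, 0 <= x -> W x <= 0.
Proof.
  intros Ha Hb Hd HW HW0 HB x1 Hx1.
  destruct (Rle_or_lt (W x1) 0) as [|Hpos]; auto. exfalso.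
  assert (Hx1p : 0 < x1) by (destruct Hx1 as [|<-]; auto; lra).
  set (A := (Rabs c + Rabs k) / d + 1).
  assert (HA : 1 <= A).
  { unfold A. assert (0 <= (Rabs c + Rabs k) / d); [|lra].
    apply Rdiv_le_0_compat; [pose proof (Rabs_pos c); pose proof (Rabs_pos k)|]; lra. }
  set (Z := fun t => A + ln (1 + t)).
  set (Z1 := fun t => / (1 + t)).
  set (Z2 := fun t => - / (1 + t) ^ 2).
  assert (Hln : forall t, 0 <= t -> 0 <= ln (1 + t)).
  { intros t Ht. rewrite <- ln_1. apply ln_le; lra. }
  assert (HZpos : forall t, 0 <= t -> A <= Z t) by (intros t Ht; unfold Z; specialize (Hln t Ht); lra).
  assert (Hrho : forall t, 0 <= t -> (a + b * t ^ 2) * Z2 t + 2 * (c + k * t) * Z1 t - 2 * d * Z t < 0).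
  { intros t Ht. unfold Z2, Z1.
    assert (H1 : (a + b * t ^ 2) * - / (1 + t) ^ 2 <= 0).
    { assert (0 < / (1 + t) ^ 2) by (apply Rinv_0_lt_compat; apply pow_lt; lra).
      assert (0 < a + b * t ^ 2) by (assert (0 <= b * t ^ 2) by (apply Rmult_le_pos; [lra| apply pow2_ge_0]); lra).
      nra. }
    assert (H2 : 2 * (c + k * t) * / (1 + t) <= 2 * (Rabs c + Rabs k)).
    { replace (2 * (c + k * t) * / (1 + t)) with (2 * ((c + k * t) / (1 + t))) by (field; lra).
      apply Rmult_le_compat_l; [lra|].
      apply Rmult_le_reg_r with (1 + t); [lra|]. unfold Rdiv.
      rewrite Rmult_assoc, Rinv_l, Rmult_1_r by lra.
      pose proof (Rle_abs c). pose proof (Rle_abs k). pose proof (Rabs_pos c). pose proof (Rabs_pos k).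
      nra. }
    assert (H3 : 2 * d * A <= 2 * d * Z t) by (apply Rmult_le_compat_l; [lra|]; apply HZpos; auto).
    assert (H4 : 2 * d * A = 2 * (Rabs c + Rabs k) + 2 * d) by (unfold A; field; lra).
    lra. }
  set (eps := W x1 / (2 * Z x1)).
  assert (HZx1 : 0 < Z x1) by (specialize (HZpos x1 Hx1); lra).
  assert (Heps : 0 < eps) by (unfold eps; apply Rdiv_lt_0_compat; lra).
  assert (HB0 : 0 < B) by (specialize (HB x1 Hx1); lra).
  set (X := exp (B / eps) + x1 + 1).
  assert (HX : x1 < X) by (unfold X; pose proof (exp_pos (B / eps)); lra).
  set (V := fun t => W t - eps * Z t).
  set (V1 := fun t => W1 t - eps * Z1 t).
  set (V2 := fun t => W2 t - eps * Z2 t).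
  assert (HV : forall t, 0 <= t -> deriv_Rplus V t (V1 t) /\ deriv_Rplus V1 t (V2 t)).
  { intros t Ht. destruct (HW t Ht) as [D1 [D2 _]]. destruct (Zder A t Ht) as [E1 E2].
    apply dR_of_dpl in E1. apply dR_of_dpl in E2. split.
    - replace (V1 t) with (1 * W1 t + - eps * / (1 + t)) by (unfold V1, Z1; ring).
      apply (dR_ext (fun t => 1 * W t + - eps * (A + ln (1 + t)))).
      + apply dR_lin; auto.
      + intros y. unfold V, Z. ring.
    - replace (V2 t) with (1 * W2 t + - eps * (- / (1 + t) ^ 2)) by (unfold V2, Z2; ring).
      apply (dR_ext (fun t => 1 * W1 t + - eps * (/ (1 + t)))).
      + apply dR_lin; auto.
      + intros y. unfold V1, Z1. ring. }
  assert (HV0 : V 0 < 0).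
  { unfold V. rewrite HW0. specialize (HZpos 0 (Rle_refl 0)). nra. }
  assert (HVx1 : 0 < V x1).
  { unfold V. unfold eps. field_simplify; lra. }
  assert (HVX : V X < 0).
  { unfold V. assert (HX0 : 0 <= X) by lra. specialize (HB X HX0).
    assert (B / eps < ln (1 + X)).
    { rewrite <- (ln_exp (B / eps)) at 1. apply ln_increasing; [apply exp_pos|]. unfold X; lra. }
    assert (eps * Z X > B).
    { unfold Z. assert (B = eps * (B / eps)) by (field; lra).
      assert (eps * (B / eps) < eps * (A + ln (1 + X))) by (apply Rmult_lt_compat_l; lra). lra. }
    lra. }
  destruct (HV 0 (Rle_refl 0)) as [DV0 _].
  destruct (dR_cont _ _ _ DV0 (- V 0) ltac:(lra)) as [eta [Heta Hc]].
  set (e1 := Rmin (eta / 2) (x1 / 2)).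
  assert (He1 : 0 < e1 /\ e1 < eta /\ e1 < x1).
  { unfold e1. pose proof (Rmin_l (eta/2) (x1/2)). pose proof (Rmin_r (eta/2) (x1/2)).
    assert (0 < Rmin (eta/2) (x1/2)) by (apply Rmin_pos; lra). lra. }
  assert (HVe1 : V e1 < 0).
  { assert (Rabs (e1 - 0) < eta) by (rewrite Rminus_0_r, Rabs_right; lra).
    specialize (Hc e1 ltac:(lra) H). apply Rabs_def2 in Hc. lra. }
  assert (Hdpl : forall t, 0 < t -> derivable_pt_lim V t (V1 t) /\ derivable_pt_lim V1 t (V2 t)).
  { intros t Ht. destruct (HV t ltac:(lra)) as [P1 P2]. split; apply dR_to_dpl; auto. }
  assert (Hcont : forall t, e1 <= t <= X -> continuity_pt V t).
  { intros t Ht. destruct (Hdpl t ltac:(lra)) as [P1 _].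
    apply derivable_continuous_pt. exists (V1 t). exact P1. }
  destruct (continuity_ab_maj V e1 X ltac:(lra) Hcont) as [x0 [Hmax Hx0]].
  assert (Hx0v : V x1 <= V x0) by (apply Hmax; lra).
  assert (Hx0i : e1 < x0 < X).
  { split; destruct Hx0 as [Hx0a Hx0b].
    - destruct Hx0a as [|E]; auto. subst x0. lra.
    - destruct Hx0b as [|E]; auto. subst x0. lra. }
  destruct (Hdpl x0 ltac:(lra)) as [DV DV1].
  assert (HV1 : V1 x0 = 0).
  { apply (dpl_locmax V x0 (V1 x0) (Rmin (x0 - e1) (X - x0)) DV).
    - apply Rmin_pos; lra.
    - intros y Hy. apply Hmax. apply Rabs_def2 in Hy. destruct Hy as [Hy1 Hy2].
      pose proof (Rmin_l (x0 - e1) (X - x0)). pose proof (Rmin_r (x0 - e1) (X - x0)). lra. }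
  assert (HV2 : 0 < V2 x0).
  { destruct (HW x0 ltac:(lra)) as [_ [_ Eq]].
    specialize (Hrho x0 ltac:(lra)).
    assert (Hs : 0 < a + b * x0 ^ 2) by (assert (0 <= b * x0 ^ 2) by (apply Rmult_le_pos; [lra| apply pow2_ge_0]); lra).
    assert (Hxx : (a + b * x0 ^ 2) * V2 x0 = 2 * d * V x0 - eps * ((a + b * x0 ^ 2) * Z2 x0 + 2 * (c + k * x0) * Z1 x0 - 2 * d * Z x0)).
    { unfold V2, V. rewrite HV1 in *. unfold V1 in HV1.
      assert (W1 x0 = eps * Z1 x0) by lra. rewrite H in Eq. nra. }
    assert (0 < (a + b * x0 ^ 2) * V2 x0).
    { rewrite Hxx. assert (0 < eps * - ((a + b * x0 ^ 2) * Z2 x0 + 2 * (c + k * x0) * Z1 x0 - 2 * d * Z x0)) by (apply Rmult_lt_0_compat; lra).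
      nra. }
    nra. }
  destruct (dpl_pos_right V1 x0 (V2 x0) DV1 HV2) as [dd [Hdd Hr]].
  set (t := x0 + Rmin dd (X - x0) / 2).
  assert (Ht : x0 < t <= X /\ t - x0 < dd).
  { unfold t. pose proof (Rmin_l dd (X - x0)). pose proof (Rmin_r dd (X - x0)).
    assert (0 < Rmin dd (X - x0)) by (apply Rmin_pos; lra). lra. }
  destruct (MVT_cor2 V V1 x0 t ltac:(lra)) as [cc [Hmvt Hcc]].
  { intros cc Hcc. apply Hdpl. lra. }
  assert (0 < V1 cc).
  { specialize (Hr (cc - x0) ltac:(lra)). rewrite HV1 in Hr.
    replace (x0 + (cc - x0)) with cc in Hr by ring. lra. }
  assert (V t <= V x0) by (apply Hmax; lra).
  assert (0 < V1 cc * (t - x0)) by (apply Rmult_lt_0_compat; lra).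
  lra.
Qed.

Record prm := mkprm { psx : R; psr : R; pc : R; pmu : R; pp : R }.

Definition sg (P : prm) (t : R) := psx P ^ 2 + psr P ^ 2 * t ^ 2.
Definition qB (P : prm) := 2 * pp P * psr P ^ 2 + 2 * pmu P + psr P ^ 2.
Definition bet (P : prm) := qB P / psr P ^ 2 - pp P - 1.
Definition ok (P : prm) := 0 < psx P /\ 0 < psr P /\ 0 < pp P /\ 0 < bet P.
Definition gf (P : prm) (s : R) :=
  exp (- (qB P / (2 * psr P ^ 2)) * ln (sg P s)
       - (2 * pc P / (psx P * psr P)) * atan (psr P / psx P * s)).
Definition LL (P : prm) (s : R) := qB P * s + 2 * pc P.
Definition P2 (P : prm) (s : R) :=
  - qB P * sg P s + 2 * psr P ^ 2 * s * LL P s + LL P s ^ 2.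
Definition P2d (P : prm) (s : R) := LL P s * (2 * psr P ^ 2 + 2 * qB P).
Definition P3 (P : prm) (s : R) :=
  P2d P s * sg P s - 2 * P2 P s * (2 * psr P ^ 2 * s) - P2 P s * LL P s.
Definition g1 (P : prm) (s : R) := gf P s * (- LL P s) / sg P s.
Definition g2 (P : prm) (s : R) := gf P s * P2 P s / sg P s ^ 2.
Definition g3 (P : prm) (s : R) := gf P s * P3 P s / sg P s ^ 3.

Lemma sg_pos P t : ok P -> 0 < sg P t.
Proof.
  intros [H1 [H2 _]]. unfold sg.
  assert (0 < psx P ^ 2) by (apply pow_lt; auto).
  assert (0 <= psr P ^ 2 * t ^ 2) by (apply Rmult_le_pos; apply pow2_ge_0).
  lra.
Qed.

Lemma gf_pos P s : 0 < gf P s.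
Proof. apply exp_pos. Qed.

Lemma gf_der P s : ok P -> is_derive (gf P) s (g1 P s).
Proof.
  intros HP. pose proof (sg_pos P s HP) as Hs. destruct HP as [H1 [H2 _]].
  unfold g1, gf. unfold sg in *. auto_derive.
  - simpl in Hs. lra.
  - match goal with |- _ * exp ?X = exp ?Y * _ / _ => replace Y with X by (simpl; ring) end.
    unfold LL, qB. field. repeat split; try lra.
Qed.

Lemma der_gQ P Q Qd n s : ok P -> is_derive Q s Qd ->
  is_derive (fun t => gf P t * Q t / sg P t ^ n) s
    (gf P s * (Qd * sg P s - INR n * Q s * (2 * psr P ^ 2 * s) - Q s * LL P s) / sg P s ^ (S n)).
Proof.
  intros HP HQ. pose proof (sg_pos P s HP) as Hs. pose proof (gf_der P s HP) as Hg.
  assert (Hsd : is_derive (sg P) s (2 * psr P ^ 2 * s)).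
  { unfold sg. auto_derive; try (simpl; ring); auto. }
  apply (is_derive_ext (fun t => gf P t * Q t * / (sg P t ^ n))).
  { intros t. reflexivity. }
  assert (H1 : is_derive (fun t => gf P t * Q t) s (g1 P s * Q s + gf P s * Qd)).
  { apply (is_derive_mult (gf P) Q s (g1 P s) Qd); auto. intros; apply Rmult_comm. }
  assert (H2 : is_derive (fun t => / (sg P t ^ n)) s (- (INR n * (2 * psr P ^ 2 * s) * sg P s ^ (pred n)) / (sg P s ^ n) ^ 2)).
  { apply (is_derive_inv (fun t => sg P t ^ n)).
    - apply (is_derive_pow (sg P) n s (2 * psr P ^ 2 * s)); auto.
    - apply pow_nonzero. lra. }
  pose proof (is_derive_mult _ _ s _ _ H1 H2 (fun a b => Rmult_comm a b)) as H3.
  simpl in H3.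
  match type of H3 with is_derive _ _ ?D => replace (gf P s * (Qd * sg P s - INR n * Q s * (2 * psr P ^ 2 * s) - Q s * LL P s) / sg P s ^ (S n)) with D; [exact H3|] end.
  unfold g1, plus, mult. simpl. assert (Hn : sg P s ^ n <> 0) by (apply pow_nonzero; lra).
  destruct n as [|m].
  - simpl. field. lra.
  - rewrite S_INR. simpl pred. simpl pow. assert (sg P s ^ m <> 0) by (apply pow_nonzero; lra).
    field. repeat split; auto; lra.
Qed.

Lemma g1_der P s : ok P -> is_derive (g1 P) s (g2 P s).
Proof.
  intros HP.
  apply (is_derive_ext (fun t => gf P t * (- LL P t) / sg P t ^ 1)).
  { intros t. unfold g1. rewrite pow_1. reflexivity. }
  assert (HQ : is_derive (fun t => - LL P t) s (- qB P)) by (unfold LL; auto_derive; try (simpl; ring); auto).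
  pose proof (der_gQ P _ _ 1 s HP HQ) as H.
  replace (g2 P s) with (gf P s * (- qB P * sg P s - INR 1 * - LL P s * (2 * psr P ^ 2 * s) - - LL P s * LL P s) / sg P s ^ 2); [exact H|].
  unfold g2, P2. simpl INR. field; pose proof (sg_pos P s HP); lra.
Qed.

Lemma g2_der P s : ok P -> is_derive (g2 P) s (g3 P s).
Proof.
  intros HP.
  assert (HQ : is_derive (P2 P) s (P2d P s)) by (unfold P2, P2d, LL, sg; auto_derive; try (simpl; ring); auto).
  pose proof (der_gQ P _ _ 2 s HP HQ) as H.
  replace (g3 P s) with (gf P s * (P2d P s * sg P s - INR 2 * P2 P s * (2 * psr P ^ 2 * s) - P2 P s * LL P s) / sg P s ^ 3); [exact H|].
  unfold g3, P3. simpl INR. field; pose proof (sg_pos P s HP); lra.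
Qed.

Lemma abs_mul_le x y A B : Rabs x <= A -> Rabs y <= B -> Rabs (x * y) <= A * B.
Proof.
  intros H1 H2. rewrite Rabs_mult. apply Rmult_le_compat; auto; apply Rabs_pos.
Qed.

Lemma abs3 x y z : Rabs (x + y + z) <= Rabs x + Rabs y + Rabs z.
Proof.
  eapply Rle_trans; [apply Rabs_triang|]. pose proof (Rabs_triang x y). lra.
Qed.

Lemma ratio_bound (G X S A m T : R) (n : nat) : 0 <= G -> 0 < m -> 0 < T -> m * T <= S ->
  Rabs X <= A * T ^ n -> Rabs (G * X / S ^ n) <= (A / m ^ n) * G.
Proof.
  intros HG Hm HT HS HX.
  assert (HS0 : 0 < S) by nra.
  assert (HSn : 0 < S ^ n) by (apply pow_lt; lra).
  assert (Hmn : 0 < m ^ n) by (apply pow_lt; lra).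
  assert (Hle : (m * T) ^ n <= S ^ n) by (apply pow_incr; split; nra).
  rewrite Rpow_mult_distr in Hle.
  unfold Rdiv. rewrite !Rabs_mult, (Rabs_right G) by lra.
  rewrite (Rabs_right (/ S ^ n)) by (apply Rle_ge; left; apply Rinv_0_lt_compat; auto).
  assert (HT0 : 0 < T ^ n) by (apply pow_lt; auto).
  assert (Rabs X * / S ^ n <= A * / m ^ n).
  { apply Rle_trans with (A * T ^ n * / S ^ n).
    - apply Rmult_le_compat_r; auto. left; apply Rinv_0_lt_compat; auto.
    - assert (0 <= A) by (pose proof (Rabs_pos X); nra).
      apply Rmult_le_reg_r with (S ^ n * m ^ n); [nra|].
      replace (A * T ^ n * / S ^ n * (S ^ n * m ^ n)) with (A * (m ^ n * T ^ n)) by (field; lra).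
      replace (A * / m ^ n * (S ^ n * m ^ n)) with (A * S ^ n) by (field; lra).
      apply Rmult_le_compat_l; auto. }
  nra.
Qed.

Lemma g_bounds P : ok P -> exists K, 0 <= K /\ forall s,
  Rabs (g1 P s) <= K * gf P s /\ Rabs (g2 P s) <= K * gf P s /\ Rabs (g3 P s) <= K * gf P s.
Proof.
  intros HP. pose proof HP as [Hx [Hr [Hp Hb]]].
  set (a := psx P ^ 2). set (b := psr P ^ 2).
  assert (Ha : 0 < a) by (apply pow_lt; auto).
  assert (Hbb : 0 < b) by (apply pow_lt; auto).
  set (m := Rmin a b).
  assert (Hm : 0 < m) by (apply Rmin_pos; auto).
  set (l := Rabs (qB P) + 2 * Rabs (pc P)).
  set (A2 := Rabs (qB P) * (a + b) + 2 * b * l + l ^ 2).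
  set (A3 := l * (2 * b + 2 * Rabs (qB P)) * (a + b) + 4 * b * A2 + A2 * l).
  assert (Hl : 0 <= l) by (unfold l; pose proof (Rabs_pos (qB P)); pose proof (Rabs_pos (pc P)); lra).
  assert (HA2 : 0 <= A2) by (unfold A2; repeat apply Rplus_le_le_0_compat; repeat apply Rmult_le_pos; try apply pow2_ge_0; try apply Rabs_pos; lra).
  assert (HA3 : 0 <= A3) by (unfold A3; pose proof (Rabs_pos (qB P)); repeat apply Rplus_le_le_0_compat; repeat apply Rmult_le_pos; try apply pow2_ge_0; try apply Rabs_pos; lra).
  exists (l / m ^ 1 + A2 / m ^ 2 + A3 / m ^ 3). split.
  { assert (0 <= l / m ^ 1) by (apply Rdiv_le_0_compat; auto; apply pow_lt; auto).
    assert (0 <= A2 / m ^ 2) by (apply Rdiv_le_0_compat; auto; apply pow_lt; auto).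
    assert (0 <= A3 / m ^ 3) by (apply Rdiv_le_0_compat; auto; apply pow_lt; auto). lra. }
  intros s.
  set (T := 1 + s ^ 2).
  assert (HT1 : 1 <= T) by (unfold T; pose proof (pow2_ge_0 s); lra).
  assert (HsT : Rabs s <= T).
  { unfold T. destruct (Rle_or_lt (Rabs s) 1); [pose proof (pow2_ge_0 s); lra|].
    assert (Rabs s ^ 2 = s ^ 2) by (rewrite RPow_abs; apply Rabs_right; apply Rle_ge, pow2_ge_0).
    nra. }
  assert (Hsg : m * T <= sg P s).
  { unfold sg, T. fold a b. pose proof (Rmin_l a b). pose proof (Rmin_r a b). fold m in H, H0.
    pose proof (pow2_ge_0 s). nra. }
  assert (Hsg2 : Rabs (sg P s) <= (a + b) * T).
  { rewrite Rabs_right by (apply Rle_ge; left; apply sg_pos; auto).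
    unfold sg, T. fold a b. pose proof (pow2_ge_0 s). nra. }
  assert (HLL : Rabs (LL P s) <= l * T).
  { unfold LL, l. eapply Rle_trans; [apply Rabs_triang|]. rewrite !Rabs_mult.
    rewrite (Rabs_right 2) by lra.
    pose proof (Rabs_pos (qB P)). pose proof (Rabs_pos (pc P)). nra. }
  assert (HP2 : Rabs (P2 P s) <= A2 * T ^ 2).
  { unfold P2. eapply Rle_trans; [apply abs3|].
    assert (E1 : Rabs (- qB P * sg P s) <= Rabs (qB P) * (a + b) * T ^ 2).
    { rewrite Rabs_mult, Rabs_Ropp. pose proof (Rabs_pos (qB P)).
      apply Rle_trans with (Rabs (qB P) * ((a + b) * T)); [apply Rmult_le_compat_l; auto|].
      assert (0 <= Rabs (qB P) * (a + b) * T * (T - 1)) by (repeat apply Rmult_le_pos; lra).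
      replace (Rabs (qB P) * (a + b) * T ^ 2) with (Rabs (qB P) * ((a + b) * T) + Rabs (qB P) * (a + b) * T * (T - 1)) by (simpl; ring).
      lra. }
    assert (E2 : Rabs (2 * psr P ^ 2 * s * LL P s) <= 2 * b * l * T ^ 2).
    { rewrite !Rabs_mult. rewrite (Rabs_right 2) by lra. rewrite (Rabs_right (psr P ^ 2)) by (apply Rle_ge; apply pow2_ge_0).
      fold b. pose proof (Rabs_pos s). pose proof (Rabs_pos (LL P s)).
      simpl. apply Rle_trans with (2 * b * T * (l * T)); [|nra].
      apply Rmult_le_compat; try nra. }
    assert (E3 : Rabs (LL P s ^ 2) <= l ^ 2 * T ^ 2).
    { rewrite <- RPow_abs. rewrite <- Rpow_mult_distr. apply pow_incr. split; auto; apply Rabs_pos. }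
    unfold A2. lra. }
  assert (HP2d : Rabs (P2d P s) <= l * (2 * b + 2 * Rabs (qB P)) * T).
  { unfold P2d. fold b.
    assert (Rabs (2 * b + 2 * qB P) <= 2 * b + 2 * Rabs (qB P)).
    { eapply Rle_trans; [apply Rabs_triang|]. rewrite !Rabs_mult, (Rabs_right 2), (Rabs_right b); lra. }
    replace (l * (2 * b + 2 * Rabs (qB P)) * T) with ((l * T) * (2 * b + 2 * Rabs (qB P))) by ring.
    apply abs_mul_le; auto. }
  assert (HP3 : Rabs (P3 P s) <= A3 * T ^ 3).
  { unfold P3. fold b.
    replace (P2d P s * sg P s - 2 * P2 P s * (2 * b * s) - P2 P s * LL P s)
      with (P2d P s * sg P s + (- (4 * b) * (P2 P s * s)) + (- (P2 P s * LL P s))) by ring.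
    eapply Rle_trans; [apply abs3|]. rewrite Rabs_Ropp.
    assert (E1 : Rabs (P2d P s * sg P s) <= (l * (2 * b + 2 * Rabs (qB P))) * (a + b) * T ^ 3).
    { eapply Rle_trans; [apply abs_mul_le; [apply HP2d|apply Hsg2]|].
      assert (0 <= l * (2 * b + 2 * Rabs (qB P)) * (a + b) * T ^ 2 * (T - 1)).
      { pose proof (Rabs_pos (qB P)). repeat apply Rmult_le_pos; try lra; apply pow2_ge_0. }
      replace (l * (2 * b + 2 * Rabs (qB P)) * (a + b) * T ^ 3) with
        (l * (2 * b + 2 * Rabs (qB P)) * T * ((a + b) * T) + l * (2 * b + 2 * Rabs (qB P)) * (a + b) * T ^ 2 * (T - 1)) by (simpl; ring).
      lra. }
    assert (E2 : Rabs (- (4 * b) * (P2 P s * s)) <= 4 * b * A2 * T ^ 3).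
    { rewrite Rabs_mult, Rabs_Ropp, Rabs_right by lra.
      replace (4 * b * A2 * T ^ 3) with (4 * b * (A2 * T ^ 2 * T)) by (simpl; ring).
      apply Rmult_le_compat_l; [lra|]. apply abs_mul_le; auto. }
    assert (E3 : Rabs (P2 P s * LL P s) <= A2 * l * T ^ 3).
    { replace (A2 * l * T ^ 3) with (A2 * T ^ 2 * (l * T)) by (simpl; ring).
      apply abs_mul_le; auto. }
    unfold A3. lra. }
  assert (Hgf : 0 <= gf P s) by (left; apply gf_pos).
  assert (R1 : Rabs (g1 P s) <= l / m ^ 1 * gf P s).
  { unfold g1. replace (sg P s) with (sg P s ^ 1) by ring.
    apply ratio_bound with T; auto; try lra. rewrite Rabs_Ropp. rewrite pow_1. auto. }
  assert (R2 : Rabs (g2 P s) <= A2 / m ^ 2 * gf P s).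
  { unfold g2. apply ratio_bound with T; auto; lra. }
  assert (R3 : Rabs (g3 P s) <= A3 / m ^ 3 * gf P s).
  { unfold g3. apply ratio_bound with T; auto; lra. }
  assert (0 <= l / m ^ 1 * gf P s) by (apply Rmult_le_pos; auto; apply Rdiv_le_0_compat; auto; apply pow_lt; auto).
  assert (0 <= A2 / m ^ 2 * gf P s) by (apply Rmult_le_pos; auto; apply Rdiv_le_0_compat; auto; apply pow_lt; auto).
  assert (0 <= A3 / m ^ 3 * gf P s) by (apply Rmult_le_pos; auto; apply Rdiv_le_0_compat; auto; apply pow_lt; auto).
  rewrite !Rmult_plus_distr_r. lra.
Qed.

Lemma exp_le x y : x <= y -> exp x <= exp y.
Proof. intros [H|H]; [left; apply exp_increasing; auto|right; rewrite H; auto]. Qed.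

Lemma q_pos P : ok P -> 0 < qB P / psr P ^ 2.
Proof. intros [_ [_ [Hp Hb]]]. unfold bet in Hb. lra. Qed.

Lemma gf_upper P : ok P -> exists Cg, 0 < Cg /\ forall s, 0 <= s ->
  gf P s <= Cg * exp (- (qB P / psr P ^ 2) * ln (1 + s)).
Proof.
  intros HP. pose proof (q_pos P HP) as Hq. pose proof HP as [Hx [Hr [Hp Hb]]].
  set (q := qB P / psr P ^ 2) in *.
  set (a := psx P ^ 2). set (b := psr P ^ 2).
  assert (Ha : 0 < a) by (apply pow_lt; auto).
  assert (Hbb : 0 < b) by (apply pow_lt; auto).
  set (m := Rmin a b).
  assert (Hm : 0 < m) by (apply Rmin_pos; auto).
  set (th := 2 * pc P / (psx P * psr P)).
  exists (exp (- (q / 2) * ln (m / 2) + 2 * Rabs th)). split; [apply exp_pos|].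
  intros s Hs. unfold gf. rewrite <- exp_plus. apply exp_le.
  assert (Hsg : m / 2 * (1 + s) ^ 2 <= sg P s).
  { unfold sg. fold a b. pose proof (Rmin_l a b). pose proof (Rmin_r a b). fold m in H, H0. clearbody m a b.
    assert (m / 2 * (1 + s) ^ 2 <= m * (1 + s ^ 2)).
    { assert (0 <= m / 2 * (1 - s) ^ 2) by (apply Rmult_le_pos; [lra|apply pow2_ge_0]).
      replace (m * (1 + s ^ 2)) with (m / 2 * (1 + s) ^ 2 + m / 2 * (1 - s) ^ 2) by field. lra. }
    assert (0 <= (b - m) * s ^ 2) by (apply Rmult_le_pos; [lra|apply pow2_ge_0]).
    assert (m * (1 + s ^ 2) <= a + b * s ^ 2) by nra. lra. }
  assert (Hln : ln (m / 2) + 2 * ln (1 + s) <= ln (sg P s)).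
  { replace (2 * ln (1 + s)) with (ln ((1 + s) ^ 2)) by (rewrite ln_pow by lra; simpl; ring).
    rewrite <- ln_mult by (try apply pow_lt; lra).
    apply ln_le; auto. apply Rmult_lt_0_compat; [lra|apply pow_lt; lra]. }
  assert (Hq2 : qB P / (2 * psr P ^ 2) = q / 2) by (unfold q; field; lra).
  rewrite Hq2. fold th.
  assert (Hat : - (th * atan (psr P / psx P * s)) <= 2 * Rabs th).
  { pose proof (atan_bound (psr P / psx P * s)). pose proof PI_4.
    assert (Rabs (atan (psr P / psx P * s)) <= 2) by (apply Rabs_le; lra).
    eapply Rle_trans; [apply Rle_abs|]. rewrite Rabs_Ropp, Rabs_mult.
    pose proof (Rabs_pos th). nra. }
  assert (- (q / 2) * ln (sg P s) <= - (q / 2) * ln (m / 2) + - q * ln (1 + s)).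
  { nra. }
  lra.
Qed.

Lemma RInt_minus' f g a b : ex_RInt f a b -> ex_RInt g a b ->
  RInt (fun x => f x - g x) a b = RInt f a b - RInt g a b.
Proof. intros H1 H2. exact (@RInt_minus R_CompleteNormedModule f g a b H1 H2). Qed.

Lemma RInt_plus' f g a b : ex_RInt f a b -> ex_RInt g a b ->
  RInt (fun x => f x + g x) a b = RInt f a b + RInt g a b.
Proof. intros H1 H2. exact (@RInt_plus R_CompleteNormedModule f g a b H1 H2). Qed.

Lemma RInt_scal' f k a b : ex_RInt f a b ->
  RInt (fun x => k * f x) a b = k * RInt f a b.
Proof. intros H1. exact (@RInt_scal R_CompleteNormedModule f a b k H1). Qed.

Lemma ex_RInt_cont (f : R -> R) a b : (forall u, continuous f u) -> ex_RInt f a b.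
Proof. intros H. apply (@ex_RInt_continuous R_CompleteNormedModule). intros; apply H. Qed.

Definition pw (p u : R) := if Rle_dec u 0 then 0 else exp (p * ln u).

Lemma pw_nonneg p u : 0 <= pw p u.
Proof. unfold pw. destruct (Rle_dec u 0); [lra|left; apply exp_pos]. Qed.

Lemma pw_pos p u : 0 < u -> 0 < pw p u.
Proof. intros H. unfold pw. destruct (Rle_dec u 0); [lra|apply exp_pos]. Qed.

Lemma pw_mono p u v : 0 < p -> u <= v -> pw p u <= pw p v.
Proof.
  intros Hp Huv. unfold pw. destruct (Rle_dec u 0); destruct (Rle_dec v 0).
  - lra.
  - left; apply exp_pos.
  - lra.
  - apply exp_le. apply Rmult_le_compat_l; [lra|]. apply ln_le; lra.
Qed.

Lemma pw_le1 p u : 0 < p -> 0 <= u -> pw p u <= exp (p * ln (1 + u)).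
Proof.
  intros Hp Hu. unfold pw. destruct (Rle_dec u 0).
  - left; apply exp_pos.
  - apply exp_le. apply Rmult_le_compat_l; [lra|]. apply ln_le; lra.
Qed.

Lemma pw_small p : 0 < p -> forall eps, 0 < eps -> exists d, 0 < d /\ forall u, u < d -> pw p u < eps.
Proof.
  intros Hp eps He. exists (exp (ln eps / p)). split; [apply exp_pos|].
  intros u Hu. unfold pw. destruct (Rle_dec u 0); [lra|].
  assert (ln u < ln eps / p).
  { rewrite <- (ln_exp (ln eps / p)). apply ln_increasing; lra. }
  rewrite <- (exp_ln eps) by auto. apply exp_increasing.
  apply Rmult_lt_reg_l with (/ p); [apply Rinv_0_lt_compat; auto|].
  replace (/ p * (p * ln u)) with (ln u) by (field; lra).
  replace (/ p * ln eps) with (ln eps / p) by (field; lra). auto.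
Qed.

Lemma pw_der_pos p u : 0 < u -> is_derive (pw p) u (p * pw p u / u).
Proof.
  intros Hu.
  apply (is_derive_ext_loc (fun t => exp (p * ln t))).
  { exists (mkposreal u Hu). intros t Ht. unfold ball in Ht; simpl in Ht. unfold AbsRing_ball, abs, minus, plus, opp in Ht; simpl in Ht.
    apply Rabs_def2 in Ht. unfold pw. destruct (Rle_dec t 0); [lra|auto]. }
  auto_derive; auto. unfold pw. destruct (Rle_dec u 0); [lra|]. field. lra.
Qed.

Lemma pw_der_neg p u : u < 0 -> is_derive (pw p) u 0.
Proof.
  intros Hu.
  apply (is_derive_ext_loc (fun t => 0)).
  { exists (mkposreal (- u) ltac:(simpl; lra)). intros t Ht. unfold ball in Ht; simpl in Ht. unfold AbsRing_ball, abs, minus, plus, opp in Ht; simpl in Ht.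
    apply Rabs_def2 in Ht. unfold pw. destruct (Rle_dec t 0); [auto|lra]. }
  auto_derive; auto.
Qed.

Lemma pw_cont p u : 0 < p -> continuous (pw p) u.
Proof.
  intros Hp. destruct (Rtotal_order u 0) as [H|[H|H]].
  - apply (@ex_derive_continuous R_AbsRing R_NormedModule). eexists; apply pw_der_neg; auto.
  - subst u. apply continuity_pt_filterlim. intros eps He.
    destruct (pw_small p Hp eps He) as [d [Hd Hs]].
    exists d; split; auto. intros x [_ Hx]. unfold pw at 2. destruct (Rle_dec 0 0); [|lra].
    simpl in *. unfold R_dist in *. rewrite Rminus_0_r in *.
    rewrite Rabs_right by (apply Rle_ge, pw_nonneg).
    apply Hs. apply Rabs_def2 in Hx. lra.
  - apply (@ex_derive_continuous R_AbsRing R_NormedModule). eexists; apply pw_der_pos; auto.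
Qed.

Lemma pw1_der p u : 0 < p -> is_derive (fun t => t * pw p t) u ((p + 1) * pw p u).
Proof.
  intros Hp. destruct (Rtotal_order u 0) as [H|[H|H]].
  - apply (is_derive_ext_loc (fun t => 0)).
    { exists (mkposreal (- u) ltac:(simpl; lra)). intros t Ht. unfold ball in Ht; simpl in Ht. unfold AbsRing_ball, abs, minus, plus, opp in Ht; simpl in Ht.
      apply Rabs_def2 in Ht. unfold pw. destruct (Rle_dec t 0); [rewrite Rmult_0_r; reflexivity|lra]. }
    unfold pw. destruct (Rle_dec u 0); [|lra]. rewrite Rmult_0_r. auto_derive; auto.
  - subst u. apply is_derive_Reals. intros eps He.
    destruct (pw_small p Hp eps He) as [d [Hd Hs]].
    exists (mkposreal d Hd). intros h Hh Hhd. simpl in Hhd.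
    unfold pw at 2 3. destruct (Rle_dec 0 0); [|lra].
    replace ((0 + h) * pw p (0 + h) - 0 * 0) with (h * pw p h) by (rewrite Rplus_0_l; ring).
    replace (h * pw p h / h - (p + 1) * 0) with (pw p h) by (field; auto).
    rewrite Rabs_right by (apply Rle_ge, pw_nonneg). apply Hs. apply Rabs_def2 in Hhd. lra.
  - pose proof (pw_der_pos p u H) as D.
    pose proof (is_derive_mult (fun t => t) (pw p) u 1 _ (is_derive_id u) D (fun a b => Rmult_comm a b)) as D2.
    clear D. rename D2 into D. simpl in D.
    match type of D with is_derive _ _ ?l => replace ((p + 1) * pw p u) with l; auto end.
    unfold plus, mult, one; simpl. field. lra.
Qed.

Lemma RInt_ext' (f g : R -> R) a b : (forall x, f x = g x) -> RInt f a b = RInt g a b.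
Proof. intros H. apply RInt_ext. intros; apply H. Qed.

Lemma abs_le_inv x y : Rabs x <= y -> - y <= x <= y.
Proof. unfold Rabs. destruct (Rcase_abs x); intros; lra. Qed.

Definition Gd (be u : R) := exp (- (1 + be) * ln (1 + u)).

Lemma Gd_pos be u : 0 < Gd be u.
Proof. apply exp_pos. Qed.

Lemma Gd_der be u : -1 < u ->
  is_derive (fun t => - exp (- be * ln (1 + t)) / be) u (Gd be u) \/ be = 0.
Proof.
  intros Hu. destruct (Req_dec be 0) as [|Hb]; [right; auto|left].
  auto_derive; [lra|]. unfold Gd.
  replace (- (1 + be) * ln (1 + u)) with (- be * ln (1 + u) + - ln (1 + u)) by ring.
  rewrite exp_plus, exp_Ropp, exp_ln by lra. field. split; lra.
Qed.

Lemma Gd_cont be u : -1 < u -> continuous (Gd be) u.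
Proof.
  intros Hu. apply (@ex_derive_continuous R_AbsRing R_NormedModule).
  unfold Gd. auto_derive. lra.
Qed.

Lemma Gd_int be n : 0 < be -> 0 <= n ->
  ex_RInt (Gd be) 0 n /\ RInt (Gd be) 0 n <= 1 / be.
Proof.
  intros Hb Hn.
  assert (H : is_RInt (Gd be) 0 n (minus (- exp (- be * ln (1 + n)) / be) (- exp (- be * ln (1 + 0)) / be))).
  { apply (is_RInt_derive (fun t => - exp (- be * ln (1 + t)) / be)).
    - intros x Hx. rewrite Rmin_left, Rmax_right in Hx by lra.
      destruct (Gd_der be x ltac:(lra)) as [D|D]; [exact D|lra].
    - intros x Hx. rewrite Rmin_left, Rmax_right in Hx by lra. apply Gd_cont. lra. }
  split; [eexists; exact H|].
  rewrite (is_RInt_unique _ _ _ _ H). unfold minus, plus, opp; simpl.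
  rewrite Rplus_0_r, ln_1, Rmult_0_r, exp_0.
  assert (0 < exp (- be * ln (1 + n))) by apply exp_pos.
  assert (E1 : - exp (- be * ln (1 + n)) / be = - (exp (- be * ln (1 + n)) / be)) by (field; lra).
  assert (E2 : - (- (1) / be) = 1 / be) by (field; lra).
  rewrite E1, E2. assert (0 < exp (- be * ln (1 + n)) / be) by (apply Rdiv_lt_0_compat; auto). lra.
Qed.

Lemma RInt_mono_b (f : R -> R) a b : 0 <= a <= b -> (forall u, continuous f u) ->
  (forall u, 0 <= u -> 0 <= f u) -> RInt f 0 a <= RInt f 0 b.
Proof.
  intros Hab Hc Hf.
  rewrite <- (@RInt_Chasles R_CompleteNormedModule f 0 a b) by (apply ex_RInt_cont; auto).
  assert (0 <= RInt f a b); [|unfold plus; simpl; lra].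
  apply RInt_ge_0; [lra|apply ex_RInt_cont; auto|]. intros x Hx. apply Hf. lra.
Qed.

Lemma RInt_incr (f : R -> R) : (forall u, continuous f u) ->
  (forall u, 0 <= u -> 0 <= f u) -> forall n, RInt f 0 (INR n) <= RInt f 0 (INR (S n)).
Proof.
  intros Hc Hf n. apply RInt_mono_b; auto. rewrite S_INR. pose proof (pos_INR n). lra.
Qed.

Lemma dom_lim be (H : R -> R) K : 0 < be -> (forall u, continuous H u) ->
  (forall u, 0 <= u -> Rabs (H u) <= K * Gd be u) ->
  exists l : R, is_lim_seq (fun n => RInt H 0 (INR n)) l /\ Rabs l <= K / be.
Proof.
  intros Hb Hc Hd.
  assert (HK : 0 <= K).
  { specialize (Hd 0 (Rle_refl 0)). pose proof (Gd_pos be 0). pose proof (Rabs_pos (H 0)).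
    destruct (Rle_or_lt 0 K); auto. nra. }
  assert (HGc : forall u, 0 <= u -> continuous (Gd be) u) by (intros; apply Gd_cont; lra).
  (* continuous extension issue: Gd only continuous for u > -1; use RInt on [0,n] only *)
  assert (HexG : forall n, 0 <= n -> ex_RInt (Gd be) 0 n) by (intros; apply Gd_int; auto).
  assert (HexH : forall n, ex_RInt H 0 n) by (intros; apply ex_RInt_cont; auto).
  assert (HexKG : forall n, 0 <= n -> ex_RInt (fun u => K * Gd be u) 0 n).
  { intros n Hn. apply (@ex_RInt_scal R_CompleteNormedModule _ 0 n K). auto. }
  assert (HexS : forall n, 0 <= n -> ex_RInt (fun u => H u + K * Gd be u) 0 n).
  { intros n Hn. apply (@ex_RInt_plus R_CompleteNormedModule); auto. }
  set (S1 := fun n => RInt (fun u => H u + K * Gd be u) 0 (INR n)).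
  set (S2 := fun n => RInt (fun u => K * Gd be u) 0 (INR n)).
  assert (Hmono : forall (f : R -> R) n, (forall u, 0 <= u -> 0 <= f u) -> ex_RInt f 0 (INR (S n)) ->
     ex_RInt f 0 (INR n) -> RInt f 0 (INR n) <= RInt f 0 (INR (S n))).
  { intros f n Hf E1 E0. pose proof (pos_INR n) as Hn. rewrite S_INR in *.
    assert (E2 : ex_RInt f (INR n) (INR n + 1)).
    { apply (@ex_RInt_Chasles_2 R_CompleteNormedModule f 0); auto. lra. }
    rewrite <- (@RInt_Chasles R_CompleteNormedModule f 0 (INR n) (INR n + 1)) by auto.
    assert (0 <= RInt f (INR n) (INR n + 1)); [|unfold plus; simpl; lra].
    apply RInt_ge_0; auto; [lra|]. intros x Hx. apply Hf. lra. }
  assert (HS1 : ex_finite_lim_seq S1).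
  { apply ex_finite_lim_seq_incr with (2 * K / be).
    - intros n. apply Hmono; try apply HexS; try apply pos_INR.
      intros u Hu. specialize (Hd u Hu). apply abs_le_inv in Hd. lra.
    - intros n. unfold S1. pose proof (pos_INR n).
      apply Rle_trans with (RInt (fun u => 2 * K * Gd be u) 0 (INR n)).
      + apply RInt_le; auto. apply (@ex_RInt_scal R_CompleteNormedModule); auto.
        intros u Hu. specialize (Hd u ltac:(lra)). apply abs_le_inv in Hd. lra.
      + rewrite RInt_scal' by auto. destruct (Gd_int be (INR n) Hb H0) as [_ B].
        replace (2 * K / be) with (2 * K * (1 / be)) by (field; lra).
        apply Rmult_le_compat_l; lra. }
  assert (HS2 : ex_finite_lim_seq S2).
  { apply ex_finite_lim_seq_incr with (K / be).
    - intros n. apply Hmono; try apply HexKG; try apply pos_INR.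
      intros u Hu. pose proof (Gd_pos be u). nra.
    - intros n. unfold S2. pose proof (pos_INR n).
      rewrite RInt_scal' by auto. destruct (Gd_int be (INR n) Hb H0) as [_ B].
      replace (K / be) with (K * (1 / be)) by (field; lra).
      apply Rmult_le_compat_l; lra. }
  destruct HS1 as [l1 Hl1]. destruct HS2 as [l2 Hl2].
  exists (l1 - l2). split.
  - apply (is_lim_seq_ext (fun n => S1 n - S2 n)).
    + intros n. unfold S1, S2. rewrite <- RInt_minus'; auto; try apply HexS; try apply HexKG; try apply pos_INR.
      apply RInt_ext'. intros; ring.
    + apply (is_lim_seq_minus' _ _ l1 l2); auto.
  - assert (Hb2 : forall n, Rabs (RInt H 0 (INR n)) <= K / be).
    { intros n. pose proof (pos_INR n).
      eapply Rle_trans; [apply abs_RInt_le; auto|].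
      apply Rle_trans with (RInt (fun u => K * Gd be u) 0 (INR n)).
      + apply RInt_le; auto.
        * apply (@ex_RInt_continuous R_CompleteNormedModule). intros z _.
          apply (continuous_comp H Rabs); auto. apply continuous_Rabs.
        * intros u Hu. apply Hd. lra.
      + rewrite RInt_scal' by auto. destruct (Gd_int be (INR n) Hb H0) as [_ B].
        replace (K / be) with (K * (1 / be)) by (field; lra).
        apply Rmult_le_compat_l; lra. }
    assert (Hlim : is_lim_seq (fun n => RInt H 0 (INR n)) (l1 - l2)).
    { apply (is_lim_seq_ext (fun n => S1 n - S2 n)).
      + intros n. unfold S1, S2. rewrite <- RInt_minus'; auto; try apply HexS; try apply HexKG; try apply pos_INR.
        apply RInt_ext'. intros; ring.
      + apply (is_lim_seq_minus' _ _ l1 l2); auto. }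
    apply Rabs_le. split.
    + assert (Hc1 : is_lim_seq (fun _ => - (K / be)) (- (K / be))) by apply is_lim_seq_const.
      pose proof (is_lim_seq_le _ _ _ _ (fun n => proj1 (abs_le_inv _ _ (Hb2 n))) Hc1 Hlim) as Hle. simpl in Hle. exact Hle.
    + assert (Hc1 : is_lim_seq (fun _ => K / be) (K / be)) by apply is_lim_seq_const.
      pose proof (is_lim_seq_le _ _ _ _ (fun n => proj2 (abs_le_inv _ _ (Hb2 n))) Hlim Hc1) as Hle. simpl in Hle. exact Hle.
Qed.

Definition Yint (p : R) (F : R -> R) (x : R) (n : nat) := RInt (fun u => pw p u * F (x + u)) 0 (INR n).
Definition Y (p : R) (F : R -> R) (x : R) := real (Lim_seq (Yint p F x)).

Lemma cont_shift (F : R -> R) x u : (forall s, continuous F s) -> continuous (fun t => F (x + t)) u.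
Proof.
  intros H. apply (continuous_comp (fun t => x + t) F).
  - apply (@ex_derive_continuous R_AbsRing R_NormedModule). auto_derive. auto.
  - apply H.
Qed.

Lemma cont_integrand p (F : R -> R) x u : 0 < p -> (forall s, continuous F s) ->
  continuous (fun t => pw p t * F (x + t)) u.
Proof.
  intros Hp H. apply (@continuous_mult R_UniformSpace R_AbsRing (pw p) (fun t => F (x + t))).
  - apply pw_cont; auto.
  - apply cont_shift; auto.
Qed.

Definition dombd (p be : R) (F : R -> R) (K : R) :=
  forall u t, 0 <= u -> u <= t -> pw p u * Rabs (F t) <= K * Gd be u.

Lemma Y_lim p be F K x : 0 < p -> 0 < be -> (forall s, continuous F s) -> dombd p be F K -> 0 <= x ->
  is_lim_seq (Yint p F x) (Y p F x) /\ Rabs (Y p F x) <= K / be.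
Proof.
  intros Hp Hb Hc Hd Hx.
  destruct (dom_lim be (fun u => pw p u * F (x + u)) K Hb) as [l [Hl Hlb]].
  - intros u. apply cont_integrand; auto.
  - intros u Hu. rewrite Rabs_mult, (Rabs_right (pw p u)) by (apply Rle_ge, pw_nonneg).
    apply Hd; lra.
  - assert (E : Y p F x = l).
    { unfold Y. replace (Lim_seq (Yint p F x)) with (Finite l); auto.
      symmetry. apply is_lim_seq_unique. exact Hl. }
    rewrite E. split; auto.
Qed.

Lemma taylor2 (F F1 F2 : R -> R) s h :
  (forall t, is_derive F t (F1 t)) -> (forall t, is_derive F1 t (F2 t)) ->
  exists c, Rmin s (s + h) <= c <= Rmax s (s + h) /\
    Rabs (F (s + h) - F s - h * F1 s) <= h ^ 2 * Rabs (F2 c).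
Proof.
  intros D1 D2.
  assert (DL1 : forall t, derivable_pt_lim F t (F1 t)) by (intros; apply is_derive_Reals; auto).
  assert (DL2 : forall t, derivable_pt_lim F1 t (F2 t)) by (intros; apply is_derive_Reals; auto).
  destruct (Rtotal_order h 0) as [Hh|[Hh|Hh]].
  - destruct (MVT_cor2 F F1 (s + h) s ltac:(lra) (fun c _ => DL1 c)) as [c1 [E1 Hc1]].
    destruct (MVT_cor2 F1 F2 c1 s ltac:(lra) (fun c _ => DL2 c)) as [c2 [E2 Hc2]].
    exists c2. rewrite Rmin_right, Rmax_left by lra. split; [lra|].
    replace (F (s + h) - F s - h * F1 s) with (- h * (F1 s - F1 c1)) by (replace (s - (s + h)) with (- h) in E1 by ring; nra).
    rewrite E2. rewrite Rabs_mult, Rabs_mult.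
    rewrite Rabs_right with (s - c1) by lra. rewrite Rabs_right with (- h) by lra.
    pose proof (Rabs_pos (F2 c2)). assert (0 <= - h * Rabs (F2 c2)) by nra.
    assert (- h * Rabs (F2 c2) * (s - c1) <= - h * Rabs (F2 c2) * (- h)) by (apply Rmult_le_compat_l; lra).
    replace (h ^ 2) with (- h * - h) by ring. nra.
  - subst h. exists s. rewrite Rplus_0_r, Rmin_left, Rmax_left by lra. split; [lra|].
    replace (F s - F s - 0 * F1 s) with 0 by ring. rewrite Rabs_R0.
    simpl. rewrite Rmult_0_l. lra.
  - destruct (MVT_cor2 F F1 s (s + h) ltac:(lra) (fun c _ => DL1 c)) as [c1 [E1 Hc1]].
    destruct (MVT_cor2 F1 F2 s c1 ltac:(lra) (fun c _ => DL2 c)) as [c2 [E2 Hc2]].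
    exists c2. rewrite Rmin_left, Rmax_right by lra. split; [lra|].
    replace (F (s + h) - F s - h * F1 s) with (h * (F1 c1 - F1 s)) by (replace (s + h - s) with h in E1 by ring; nra).
    rewrite E2. rewrite Rabs_mult, Rabs_mult.
    rewrite Rabs_right with (c1 - s) by lra. rewrite Rabs_right with h by lra.
    pose proof (Rabs_pos (F2 c2)). assert (0 <= h * Rabs (F2 c2)) by nra.
    assert (h * Rabs (F2 c2) * (c1 - s) <= h * Rabs (F2 c2) * h) by (apply Rmult_le_compat_l; lra).
    replace (h ^ 2) with (h * h) by ring. nra.
Qed.

Lemma der_cont (F F1 : R -> R) : (forall t, is_derive F t (F1 t)) -> forall s, continuous F s.
Proof.
  intros H s. apply (@ex_derive_continuous R_AbsRing R_NormedModule). eexists; apply H.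
Qed.

Lemma Y_der p be F F1 F2 K x : 0 < p -> 0 < be -> 0 <= K ->
  (forall t, is_derive F t (F1 t)) -> (forall t, is_derive F1 t (F2 t)) ->
  dombd p be F K -> dombd p be F1 K -> dombd p be F2 K -> 0 <= x ->
  deriv_Rplus (Y p F) x (Y p F1 x).
Proof.
  intros Hp Hb HK D1 D2 B0 B1 B2 Hx eps Heps.
  pose proof (der_cont F F1 D1) as C0. pose proof (der_cont F1 F2 D2) as C1.
  exists (eps * be / (K + 1)). split; [apply Rdiv_lt_0_compat; [apply Rmult_lt_0_compat|]; lra|].
  intros y Hy Hyx Hyd. set (h := y - x).
  assert (Hh : h <> 0) by (unfold h; lra).
  destruct (Y_lim p be F K y Hp Hb C0 B0 Hy) as [Ly _].
  destruct (Y_lim p be F K x Hp Hb C0 B0 Hx) as [Lx _].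
  destruct (Y_lim p be F1 K x Hp Hb C1 B1 Hx) as [L1x _].
  assert (Lc : is_lim_seq (fun n => Yint p F y n - Yint p F x n - h * Yint p F1 x n)
                 (Y p F y - Y p F x - h * Y p F1 x)).
  { apply (is_lim_seq_minus' (fun n => Yint p F y n - Yint p F x n) (fun n => h * Yint p F1 x n) (Y p F y - Y p F x) (h * Y p F1 x)).
    - apply (is_lim_seq_minus' (Yint p F y) (Yint p F x)); auto.
    - apply (is_lim_seq_scal_l (Yint p F1 x) h (Y p F1 x)); auto. }
  destruct (dom_lim be (fun u => pw p u * (F (y + u) - F (x + u) - h * F1 (x + u))) (h ^ 2 * K) Hb) as [l [Hl Hlb]].
  - intros u. apply (@continuous_mult R_UniformSpace R_AbsRing (pw p) (fun t => F (y + t) - F (x + t) - h * F1 (x + t))).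
    + apply pw_cont; auto.
    + apply (@continuous_minus R_UniformSpace R_AbsRing R_NormedModule).
      * apply (@continuous_minus R_UniformSpace R_AbsRing R_NormedModule); apply cont_shift; auto.
      * apply (@continuous_scal_r R_UniformSpace R_AbsRing R_NormedModule h (fun t => F1 (x + t))).
        apply cont_shift; auto.
  - intros u Hu. rewrite Rabs_mult, (Rabs_right (pw p u)) by (apply Rle_ge, pw_nonneg).
    destruct (taylor2 F F1 F2 (x + u) h D1 D2) as [c [Hc Hcb]].
    replace (x + u + h) with (y + u) in * by (unfold h; ring).
    assert (Hcu : u <= c).
    { destruct Hc as [Hc _]. eapply Rle_trans; [|apply Hc]. apply Rmin_glb; lra. }
    specialize (B2 u c Hu Hcu).
    apply Rle_trans with (pw p u * (h ^ 2 * Rabs (F2 c))).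
    + apply Rmult_le_compat_l; auto. apply pw_nonneg.
    + assert (0 <= h ^ 2) by apply pow2_ge_0.
      replace (pw p u * (h ^ 2 * Rabs (F2 c))) with (h ^ 2 * (pw p u * Rabs (F2 c))) by ring.
      rewrite Rmult_assoc. apply Rmult_le_compat_l; auto.
  - assert (E : l = Y p F y - Y p F x - h * Y p F1 x).
    { assert (Finite l = Finite (Y p F y - Y p F x - h * Y p F1 x)); [|congruence].
      rewrite <- (is_lim_seq_unique _ _ Hl). rewrite <- (is_lim_seq_unique _ _ Lc).
      apply Lim_seq_ext. intros n. unfold Yint.
      assert (E1 : forall z (G : R -> R), (forall s, continuous G s) -> ex_RInt (fun u => pw p u * G (z + u)) 0 (INR n)).
      { intros z G HG. apply ex_RInt_cont. intros u. apply cont_integrand; auto. }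
      rewrite <- RInt_scal' by (apply E1; auto).
      rewrite <- RInt_minus' by (apply E1; auto).
      rewrite <- RInt_minus'.
      - apply RInt_ext'. intros u. ring.
      - apply ex_RInt_cont. intros u.
        apply (@continuous_minus R_UniformSpace R_AbsRing R_NormedModule); apply cont_integrand; auto.
      - apply ex_RInt_cont. intros u.
        apply (@continuous_scal_r R_UniformSpace R_AbsRing R_NormedModule h (fun t => pw p t * F1 (x + t))).
        apply cont_integrand; auto. }
    rewrite E in Hlb.
    replace ((Y p F y - Y p F x) / h - Y p F1 x) with ((Y p F y - Y p F x - h * Y p F1 x) / h) by (field; auto).
    unfold Rdiv. rewrite Rabs_mult, Rabs_inv.
    assert (Hah : 0 < Rabs h) by (apply Rabs_pos_lt; auto).
    apply Rle_lt_trans with (h ^ 2 * K / be * / Rabs h).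
    + apply Rmult_le_compat_r; [left; apply Rinv_0_lt_compat; auto|auto].
    + replace (h ^ 2 * K / be * / Rabs h) with (Rabs h * K / be).
      2:{ rewrite <- (pow2_abs h). field. split; lra. }
      fold h in Hyd.
      apply Rle_lt_trans with (Rabs h * ((K + 1) / be)).
      * replace (Rabs h * K / be) with (Rabs h * (K / be)) by (field; lra).
        apply Rmult_le_compat_l; [apply Rabs_pos|]. unfold Rdiv.
        apply Rmult_le_compat_r; [left; apply Rinv_0_lt_compat; auto|lra].
      * replace eps with (eps * be / (K + 1) * ((K + 1) / be)) by (field; lra).
        apply Rmult_lt_compat_r; [apply Rdiv_lt_0_compat; lra|exact Hyd].
Qed.

Lemma Gd_eq be p q u : 0 <= u -> be = q - p - 1 ->
  exp (p * ln (1 + u)) * exp (- q * ln (1 + u)) = Gd be u.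
Proof.
  intros Hu Hb. unfold Gd. rewrite <- exp_plus. f_equal. subst be. ring.
Qed.

Lemma all_bounds P : ok P -> exists K Kb Cg, 0 <= K /\ 0 <= Kb /\ 0 < Cg /\
  dombd (pp P) (bet P) (gf P) K /\ dombd (pp P) (bet P) (g1 P) K /\
  dombd (pp P) (bet P) (g2 P) K /\ dombd (pp P) (bet P) (g3 P) K /\
  (forall s, Rabs (g1 P s) <= Kb * gf P s) /\
  (forall u t, 0 <= u -> u <= t -> pw (pp P) u * gf P t <= Cg * Gd (bet P) u).
Proof.
  intros HP. destruct (g_bounds P HP) as [Kb [HKb Hg]].
  destruct (gf_upper P HP) as [Cg [HCg Hu]].
  pose proof HP as [Hx [Hr [Hp Hb]]]. pose proof (q_pos P HP) as Hq.
  assert (B0 : forall u t, 0 <= u -> u <= t -> pw (pp P) u * gf P t <= Cg * Gd (bet P) u).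
  { intros u t Hu0 Hut.
    apply Rle_trans with (exp (pp P * ln (1 + u)) * (Cg * exp (- (qB P / psr P ^ 2) * ln (1 + u)))).
    - apply Rmult_le_compat; [apply pw_nonneg|left; apply gf_pos|apply pw_le1; auto|].
      eapply Rle_trans; [apply Hu; lra|]. apply Rmult_le_compat_l; [lra|].
      apply exp_le. assert (ln (1 + u) <= ln (1 + t)) by (apply ln_le; lra). nra.
    - rewrite <- (Gd_eq (bet P) (pp P) (qB P / psr P ^ 2) u Hu0) by (unfold bet; ring).
      right; ring. }
  assert (Bfin : forall u t, 0 <= u -> u <= t -> Kb * (pw (pp P) u * gf P t) + pw (pp P) u * gf P t <= (Kb + 1) * Cg * Gd (bet P) u).
  { intros u t Hu0 Hut. specialize (B0 u t Hu0 Hut).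
    assert (Kb * (pw (pp P) u * gf P t) <= Kb * (Cg * Gd (bet P) u)) by (apply Rmult_le_compat_l; auto).
    replace ((Kb + 1) * Cg * Gd (bet P) u) with (Kb * (Cg * Gd (bet P) u) + Cg * Gd (bet P) u) by ring.
    lra. }
  assert (Bj : forall (G : R -> R), (forall s, Rabs (G s) <= Kb * gf P s) ->
     dombd (pp P) (bet P) G ((Kb + 1) * Cg)).
  { intros G HG u t Hu0 Hut. specialize (Bfin u t Hu0 Hut).
    pose proof (pw_nonneg (pp P) u). pose proof (gf_pos P t).
    assert (0 <= pw (pp P) u * gf P t) by (apply Rmult_le_pos; lra).
    apply Rle_trans with (pw (pp P) u * (Kb * gf P t)); [apply Rmult_le_compat_l; auto|].
    replace (pw (pp P) u * (Kb * gf P t)) with (Kb * (pw (pp P) u * gf P t)) by ring. lra. }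
  exists ((Kb + 1) * Cg), Kb, Cg. repeat split; auto.
  - apply Rmult_le_pos; lra.
  - intros u t Hu0 Hut. rewrite Rabs_right by (left; apply gf_pos).
    specialize (Bfin u t Hu0 Hut).
    assert (0 <= Kb * (pw (pp P) u * gf P t)) by (apply Rmult_le_pos; auto; apply Rmult_le_pos; [apply pw_nonneg|left; apply gf_pos]).
    lra.
  - apply Bj. intros s; apply Hg.
  - apply Bj. intros s; apply Hg.
  - apply Bj. intros s; apply Hg.
  - intros s. apply Hg.
Qed.

Lemma lim_decay be : 0 < be -> is_lim_seq (fun n => exp (- be * ln (1 + INR n))) 0.
Proof.
  intros Hb. apply is_lim_seq_Reals. intros eps He.
  destruct (INR_archimed 1 (exp (- ln eps / be)) ltac:(lra)) as [N HN].
  exists N. intros n Hn. unfold R_dist. rewrite Rminus_0_r.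
  rewrite Rabs_right by (left; apply exp_pos).
  apply le_INR in Hn. rewrite Rmult_1_r in HN.
  assert (H1 : - ln eps / be < ln (1 + INR n)).
  { rewrite <- (ln_exp (- ln eps / be)). apply ln_increasing; [apply exp_pos|]. lra. }
  rewrite <- (exp_ln eps) by lra. apply exp_increasing.
  apply Rmult_lt_reg_l with (/ be); [apply Rinv_0_lt_compat; auto|].
  replace (/ be * (- be * ln (1 + INR n))) with (- ln (1 + INR n)) by (field; lra).
  replace (/ be * ln eps) with (- (- ln eps / be)) by (field; lra). lra.
Qed.

Definition Nt (P : prm) (x s : R) :=
  sg P x * (pp P * psr P ^ 2 - qB P) + psr P ^ 2 * (x + s) * (pp P * psr P ^ 2 * (x + s) + 2 * pc P + (2 * pmu P + psr P ^ 2) * x).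
Definition Ntd (P : prm) (x s : R) :=
  psr P ^ 2 * (pp P * psr P ^ 2 * (x + s) + 2 * pc P + (2 * pmu P + psr P ^ 2) * x) + psr P ^ 2 * (x + s) * (pp P * psr P ^ 2).
Definition Rt (P : prm) (x s : R) := gf P s * Nt P x s / sg P s ^ 1.
Definition Rtd (P : prm) (x s : R) :=
  gf P s * (Ntd P x s * sg P s - INR 1 * Nt P x s * (2 * psr P ^ 2 * s) - Nt P x s * LL P s) / sg P s ^ 2.
Definition taux (P : prm) (x : R) := 2 * pc P + (2 * pmu P + psr P ^ 2) * x.
Definition ddl (P : prm) := psr P ^ 2 * pp P ^ 2 + 2 * pmu P * pp P.

Lemma Rt_der P x s : ok P -> is_derive (Rt P x) s (Rtd P x s).
Proof.
  intros HP. unfold Rt, Rtd. apply (der_gQ P (Nt P x) (Ntd P x s) 1 s HP).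
  unfold Nt, Ntd. auto_derive; auto. ring.
Qed.

Lemma key_identity P x s : ok P ->
  (pp P + 1) * Rt P x s + (s - x) * Rtd P x s =
  sg P x * g2 P s + taux P x * g1 P s - ddl P * gf P s.
Proof.
  intros HP. pose proof (sg_pos P s HP) as Hs.
  unfold Rt, Rtd, g1, g2, P2, LL, Nt, Ntd, taux, ddl, qB. simpl INR.
  set (G := gf P s). clearbody G. unfold sg in *. field. lra.
Qed.

Lemma B_identity P x s : ok P ->
  (s - x) * Rt P x s = gf P s * (pp P * psr P ^ 2 * (x + s) + taux P x) + sg P x * g1 P s.
Proof.
  intros HP. pose proof (sg_pos P s HP) as Hs.
  unfold Rt, g1, LL, Nt, taux, qB.
  set (G := gf P s). clearbody G. unfold sg in *. field. lra.
Qed.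

Definition Hc (P : prm) (x s : R) := sg P x * g2 P s + taux P x * g1 P s - ddl P * gf P s.

Lemma Hc_cont P x s : ok P -> continuous (Hc P x) s.
Proof.
  intros HP. apply (@ex_derive_continuous R_AbsRing R_NormedModule).
  unfold Hc. auto_derive. repeat split; eexists; [apply g2_der|apply g1_der|apply gf_der]; auto.
Qed.

Lemma Phi_der P (x u : R) : ok P ->
  is_derive (fun t => t * pw (pp P) t * Rt P x (x + t)) u (pw (pp P) u * Hc P x (x + u)).
Proof.
  intros HP. pose proof HP as [Hx [Hr [Hp Hb]]].
  pose proof (pw1_der (pp P) u Hp) as D1.
  assert (D2 : is_derive (fun t => Rt P x (x + t)) u (Rtd P x (x + u))).
  { assert (Ds : is_derive (fun t => x + t) u 1) by (auto_derive; auto; ring).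
    pose proof (is_derive_comp (Rt P x) (fun t => x + t) u (Rtd P x (x + u)) 1 (Rt_der P x (x + u) HP) Ds) as D.
    change (scal 1 (Rtd P x (x + u))) with (1 * Rtd P x (x + u)) in D.
    rewrite Rmult_1_l in D. exact D. }
  pose proof (is_derive_mult _ _ u _ _ D1 D2 (fun a b => Rmult_comm a b)) as D3.
  match type of D3 with is_derive _ _ ?l => replace (pw (pp P) u * Hc P x (x + u)) with l end.
  - eapply is_derive_ext; [|apply D3]. intros t; reflexivity.
  - assert (E : pw (pp P) u * Hc P x (x + u) = (pp P + 1) * pw (pp P) u * Rt P x (x + u) + u * pw (pp P) u * Rtd P x (x + u)).
    { unfold Hc. rewrite <- (key_identity P x (x + u) HP).
      replace (x + u - x) with u by ring. ring. }
    symmetry. rewrite E. reflexivity.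
Qed.

Lemma lim_opp (u : nat -> R) (l : R) : is_lim_seq u l -> is_lim_seq (fun n => - u n) (- l).
Proof. intros H. pose proof (is_lim_seq_opp u l) as H2. simpl in H2. apply H2. exact H. Qed.

Lemma lim_scal (u : nat -> R) (a l : R) : is_lim_seq u l -> is_lim_seq (fun n => a * u n) (a * l).
Proof. intros H. pose proof (is_lim_seq_scal_l u a l H) as H2. simpl in H2. exact H2. Qed.

Lemma ode_holds P x : ok P -> 0 <= x ->
  sg P x * Y (pp P) (g2 P) x + taux P x * Y (pp P) (g1 P) x - ddl P * Y (pp P) (gf P) x = 0.
Proof.
  intros HP Hx0.
  destruct (all_bounds P HP) as [K [Kb [Cg [HK [HKb [HCg [B0 [B1 [B2 [B3 [Hg1 Hpg]]]]]]]]]]].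
  pose proof HP as [Hx [Hr [Hp Hb]]].
  set (p := pp P) in *. set (be := bet P) in *.
  assert (C0 : forall s, continuous (gf P) s) by (apply (der_cont _ (g1 P)); intros; apply gf_der; auto).
  assert (C1 : forall s, continuous (g1 P) s) by (apply (der_cont _ (g2 P)); intros; apply g1_der; auto).
  assert (C2 : forall s, continuous (g2 P) s) by (apply (der_cont _ (g3 P)); intros; apply g2_der; auto).
  destruct (Y_lim p be (gf P) K x Hp Hb C0 B0 Hx0) as [L0 _].
  destruct (Y_lim p be (g1 P) K x Hp Hb C1 B1 Hx0) as [L1 _].
  destruct (Y_lim p be (g2 P) K x Hp Hb C2 B2 Hx0) as [L2 _].
  set (Phi := fun t => t * pw p t * Rt P x (x + t)).
  assert (Lc : is_lim_seq (fun n => sg P x * Yint p (g2 P) x n + taux P x * Yint p (g1 P) x n - ddl P * Yint p (gf P) x n)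
                 (sg P x * Y p (g2 P) x + taux P x * Y p (g1 P) x - ddl P * Y p (gf P) x)).
  { apply (is_lim_seq_minus' (fun n => sg P x * Yint p (g2 P) x n + taux P x * Yint p (g1 P) x n) (fun n => ddl P * Yint p (gf P) x n)).
    - apply (is_lim_seq_plus' (fun n => sg P x * Yint p (g2 P) x n) (fun n => taux P x * Yint p (g1 P) x n)).
      + apply lim_scal; auto.
      + apply lim_scal; auto.
    - apply lim_scal; auto. }
  assert (Heq : forall n, sg P x * Yint p (g2 P) x n + taux P x * Yint p (g1 P) x n - ddl P * Yint p (gf P) x n = Phi (INR n)).
  { intros n.
    assert (E1 : forall (G : R -> R), (forall s, continuous G s) -> ex_RInt (fun u => pw p u * G (x + u)) 0 (INR n)).
    { intros G HG. apply ex_RInt_cont. intros u. apply cont_integrand; auto. }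
    assert (Ea : sg P x * Yint p (g2 P) x n + taux P x * Yint p (g1 P) x n - ddl P * Yint p (gf P) x n
                 = RInt (fun u => pw p u * Hc P x (x + u)) 0 (INR n)).
    { unfold Yint. rewrite <- !RInt_scal' by (apply E1; auto).
      rewrite <- RInt_plus'.
      2, 3: apply ex_RInt_cont; intros u; apply (@continuous_scal_r R_UniformSpace R_AbsRing R_NormedModule _ (fun t => pw p t * _ (x + t))); apply cont_integrand; auto.
      rewrite <- RInt_minus'.
      - apply RInt_ext'. intros u. unfold Hc. ring.
      - apply ex_RInt_cont; intros u.
        apply (@continuous_plus R_UniformSpace R_AbsRing R_NormedModule); 
        apply (@continuous_scal_r R_UniformSpace R_AbsRing R_NormedModule _ (fun t => pw p t * _ (x + t))); apply cont_integrand; auto.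
      - apply ex_RInt_cont; intros u.
        apply (@continuous_scal_r R_UniformSpace R_AbsRing R_NormedModule _ (fun t => pw p t * _ (x + t))); apply cont_integrand; auto. }
    rewrite Ea.
    assert (HI : is_RInt (fun u => pw p u * Hc P x (x + u)) 0 (INR n) (minus (Phi (INR n)) (Phi 0))).
    { apply (is_RInt_derive Phi). 
      - intros u _. apply Phi_der; auto.
      - intros u _. apply cont_integrand; auto. intros s; apply Hc_cont; auto. }
    rewrite (is_RInt_unique _ _ _ _ HI). unfold Phi at 2. unfold minus, plus, opp; simpl. ring. }
  set (b := psr P ^ 2).
  set (Cz := 2 * p * b * (1 + x) + Rabs (taux P x) + sg P x * Kb).
  assert (Hsgx : 0 < sg P x) by (apply sg_pos; auto).
  assert (Hbp : 0 < b) by (unfold b; apply pow_lt; auto).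
  assert (HCz : 0 <= Cz).
  { unfold Cz. pose proof (Rabs_pos (taux P x)).
    assert (0 <= 2 * p * b * (1 + x)) by (repeat apply Rmult_le_pos; lra).
    assert (0 <= sg P x * Kb) by (apply Rmult_le_pos; lra). lra. }
  assert (Hbd : forall u, 0 <= u -> Rabs (Phi u) <= Cz * Cg * exp (- be * ln (1 + u))).
  { intros u Hu. set (s := x + u).
    assert (E : Phi u = pw p u * (gf P s * (p * b * (x + s) + taux P x) + sg P x * g1 P s)).
    { unfold Phi. pose proof (B_identity P x s HP) as BI. unfold s in *. replace (x + u - x) with u in BI by ring.
      transitivity (pw p u * (u * Rt P x (x + u))); [ring|]. rewrite BI. reflexivity. }
    rewrite E. clear E.
    pose proof (pw_nonneg p u) as Hpw. pose proof (gf_pos P s) as Hgf.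
    assert (HA : 0 <= p * b * (x + s)) by (unfold s; repeat apply Rmult_le_pos; lra).
    assert (S1 : Rabs (gf P s * (p * b * (x + s) + taux P x) + sg P x * g1 P s) <= gf P s * (p * b * (x + s) + Rabs (taux P x) + sg P x * Kb)).
    { eapply Rle_trans; [apply Rabs_triang|]. rewrite !Rabs_mult.
      rewrite (Rabs_right (gf P s)) by lra. rewrite (Rabs_right (sg P x)) by lra.
      assert (Rabs (p * b * (x + s) + taux P x) <= p * b * (x + s) + Rabs (taux P x)).
      { eapply Rle_trans; [apply Rabs_triang|]. rewrite (Rabs_right (p * b * (x + s))) by lra. lra. }
      specialize (Hg1 s).
      assert (gf P s * Rabs (p * b * (x + s) + taux P x) <= gf P s * (p * b * (x + s) + Rabs (taux P x))) by (apply Rmult_le_compat_l; lra).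
      assert (sg P x * Rabs (g1 P s) <= sg P x * (Kb * gf P s)) by (apply Rmult_le_compat_l; lra).
      nra. }
    assert (S2 : p * b * (x + s) + Rabs (taux P x) + sg P x * Kb <= Cz * (1 + u)).
    { unfold Cz, s. pose proof (Rabs_pos (taux P x)).
      assert (0 <= sg P x * Kb) by (apply Rmult_le_pos; lra).
      assert (p * b * (x + (x + u)) <= 2 * p * b * (1 + x) * (1 + u)).
      { assert (0 < p * b) by (apply Rmult_lt_0_compat; lra).
        replace (2 * p * b * (1 + x) * (1 + u)) with (p * b * (2 * (1 + x) * (1 + u))) by ring.
        apply Rmult_le_compat_l; [lra|]. assert (0 <= x * u) by (apply Rmult_le_pos; lra). nra. }
      assert (Rabs (taux P x) <= Rabs (taux P x) * (1 + u)) by nra.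
      assert (sg P x * Kb <= sg P x * Kb * (1 + u)) by nra.
      replace ((2 * p * b * (1 + x) + Rabs (taux P x) + sg P x * Kb) * (1 + u)) with
        (2 * p * b * (1 + x) * (1 + u) + Rabs (taux P x) * (1 + u) + sg P x * Kb * (1 + u)) by ring.
      lra. }
    assert (S3 : pw p u * gf P s <= Cg * Gd be u) by (apply Hpg; unfold s; lra).
    assert (S4 : (1 + u) * Gd be u = exp (- be * ln (1 + u))).
    { unfold Gd. rewrite <- (exp_ln (1 + u)) at 1 by lra. rewrite <- exp_plus. f_equal. ring. }
    rewrite Rabs_mult, (Rabs_right (pw p u)) by lra.
    apply Rle_trans with (pw p u * (gf P s * (Cz * (1 + u)))).
    { apply Rmult_le_compat_l; auto. eapply Rle_trans; [apply S1|]. apply Rmult_le_compat_l; lra. }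
    rewrite <- S4.
    replace (pw p u * (gf P s * (Cz * (1 + u)))) with ((pw p u * gf P s) * (Cz * (1 + u))) by ring.
    replace (Cz * Cg * ((1 + u) * Gd be u)) with ((Cg * Gd be u) * (Cz * (1 + u))) by ring.
    apply Rmult_le_compat_r; auto. apply Rmult_le_pos; lra. }
  assert (LPhi : is_lim_seq (fun n => Phi (INR n)) 0).
  { apply (is_lim_seq_le_le (fun n => - (Cz * Cg * exp (- be * ln (1 + INR n)))) _ (fun n => Cz * Cg * exp (- be * ln (1 + INR n)))).
    - intros n. apply abs_le_inv. apply Hbd. apply pos_INR.
    - replace (Finite 0) with (Finite (- (Cz * Cg * 0))) by (f_equal; ring).
      apply (lim_opp (fun n => Cz * Cg * exp (- be * ln (1 + INR n)))).
      apply lim_scal. apply lim_decay; auto.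
    - replace (Finite 0) with (Finite (Cz * Cg * 0)) by (f_equal; ring).
      apply lim_scal. apply lim_decay; auto. }
  assert (Lfin : is_lim_seq (fun n => sg P x * Yint p (g2 P) x n + taux P x * Yint p (g1 P) x n - ddl P * Yint p (gf P) x n) 0).
  { apply (is_lim_seq_ext (fun n => Phi (INR n))); auto. }
  pose proof (is_lim_seq_unique _ _ Lc) as U1. pose proof (is_lim_seq_unique _ _ Lfin) as U2.
  rewrite U1 in U2. injection U2. auto.
Qed.

Lemma integrand_nonneg P x u : 0 <= pw (pp P) u * gf P (x + u).
Proof. apply Rmult_le_pos; [apply pw_nonneg|left; apply gf_pos]. Qed.

Lemma Y_basic P x : ok P -> 0 <= x ->
  is_lim_seq (Yint (pp P) (gf P) x) (Y (pp P) (gf P) x) /\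
  (forall n, Yint (pp P) (gf P) x n <= Y (pp P) (gf P) x) /\
  (forall a, 0 <= a -> RInt (fun u => pw (pp P) u * gf P (x + u)) 0 a <= Y (pp P) (gf P) x).
Proof.
  intros HP Hx0.
  destruct (all_bounds P HP) as [K [Kb [Cg [HK [HKb [HCg [B0 _]]]]]]].
  pose proof HP as [Hx [Hr [Hp Hb]]].
  assert (C0 : forall s, continuous (gf P) s) by (apply (der_cont _ (g1 P)); intros; apply gf_der; auto).
  destruct (Y_lim (pp P) (bet P) (gf P) K x Hp Hb C0 B0 Hx0) as [L0 _].
  assert (Cint : forall u, continuous (fun t => pw (pp P) t * gf P (x + t)) u) by (intros; apply cont_integrand; auto).
  assert (Hinc : forall n, Yint (pp P) (gf P) x n <= Yint (pp P) (gf P) x (S n)).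
  { intros n. unfold Yint. apply RInt_incr; auto. intros; apply integrand_nonneg. }
  assert (Hle : forall n, Yint (pp P) (gf P) x n <= Y (pp P) (gf P) x).
  { intros n. apply (is_lim_seq_incr_compare _ _ L0 Hinc). }
  repeat split; auto.
  intros a Ha. destruct (INR_archimed 1 a ltac:(lra)) as [m Hm]. rewrite Rmult_1_r in Hm.
  eapply Rle_trans; [|apply (Hle m)]. unfold Yint.
  apply RInt_mono_b; auto; [lra|]. intros; apply integrand_nonneg.
Qed.

Lemma Y_pos P x : ok P -> 0 <= x -> 0 < Y (pp P) (gf P) x.
Proof.
  intros HP Hx0. destruct (Y_basic P x HP Hx0) as [_ [_ H]].
  pose proof HP as [Hx [Hr [Hp Hb]]].
  eapply Rlt_le_trans; [|apply (H 1); lra].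
  assert (E : RInt (fun _ => 0) 0 1 = 0).
  { rewrite RInt_const. apply Rmult_0_r. }
  assert (RInt (fun _ => 0) 0 1 < RInt (fun u => pw (pp P) u * gf P (x + u)) 0 1); [|lra].
  apply RInt_lt; [lra| | |].
  - intros; apply cont_integrand; auto.
    apply (der_cont _ (g1 P)); intros; apply gf_der; auto.
  - intros; apply continuous_const.
  - intros u Hu. apply Rmult_lt_0_compat; [apply pw_pos; lra|apply gf_pos].
Qed.

Lemma Y_decr P x1 x2 : ok P -> 0 <= x1 <= x2 -> Y (pp P) (gf P) x2 <= Y (pp P) (gf P) x1.
Proof.
  intros HP Hx.
  pose proof HP as [Hx' [Hr [Hp Hb]]].
  destruct (Y_basic P x2 HP ltac:(lra)) as [L2 _].
  destruct (Y_basic P x1 HP ltac:(lra)) as [_ [_ H1]].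
  set (d := x2 - x1).
  assert (C0 : forall s, continuous (gf P) s) by (apply (der_cont _ (g1 P)); intros; apply gf_der; auto).
  assert (Hn : forall n, Yint (pp P) (gf P) x2 n <= Y (pp P) (gf P) x1).
  { intros n. pose proof (pos_INR n) as Hn0. unfold Yint.
    set (f := fun v => pw (pp P) (v - d) * gf P (x1 + v)).
    assert (Cf : forall v, continuous f v).
    { intros v. unfold f. apply (@continuous_mult R_UniformSpace R_AbsRing (fun t => pw (pp P) (t - d)) (fun t => gf P (x1 + t))).
      - apply (continuous_comp (fun t => t - d) (pw (pp P))); [|apply pw_cont; auto].
        apply (@ex_derive_continuous R_AbsRing R_NormedModule). auto_derive. auto.
      - apply cont_shift; auto. }
    assert (E : RInt (fun u => pw (pp P) u * gf P (x2 + u)) 0 (INR n) = RInt f d (INR n + d)).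
    { pose proof (@RInt_comp_lin R_CompleteNormedModule f 1 d 0 (INR n) (ex_RInt_cont f _ _ Cf)) as E.
      replace (1 * 0 + d) with d in E by ring. replace (1 * INR n + d) with (INR n + d) in E by ring.
      rewrite <- E. apply RInt_ext'. intros u. unfold f.
      change (scal 1 (pw (pp P) (1 * u + d - d) * gf P (x1 + (1 * u + d)))) with (1 * (pw (pp P) (1 * u + d - d) * gf P (x1 + (1 * u + d)))).
      replace (1 * u + d - d) with u by ring. replace (x1 + (1 * u + d)) with (x2 + u) by (unfold d; ring). ring. }
    rewrite E.
    set (g := fun u => pw (pp P) u * gf P (x1 + u)).
    assert (Cg : forall u, continuous g u) by (intros; apply cont_integrand; auto).
    apply Rle_trans with (RInt g d (INR n + d)).
    { apply RInt_le; [unfold d; lra|apply ex_RInt_cont; auto|apply ex_RInt_cont; auto|].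
      intros u Hu. unfold f, g. apply Rmult_le_compat_r; [left; apply gf_pos|]. apply pw_mono; auto. unfold d; lra. }
    apply Rle_trans with (RInt g 0 (INR n + d)).
    { rewrite <- (@RInt_Chasles R_CompleteNormedModule g 0 d (INR n + d)) by (apply ex_RInt_cont; auto).
      assert (0 <= RInt g 0 d); [|unfold plus; simpl; lra].
      apply RInt_ge_0; [unfold d; lra|apply ex_RInt_cont; auto|]. intros; apply integrand_nonneg. }
    apply H1. unfold d; lra. }
  assert (Hc : is_lim_seq (fun _ => Y (pp P) (gf P) x1) (Y (pp P) (gf P) x1)) by apply is_lim_seq_const.
  pose proof (is_lim_seq_le _ _ _ _ Hn L2 Hc) as R. simpl in R. exact R.
Qed.

Lemma decr_deriv_nonpos (F : R -> R) x l : 0 < x -> (forall y, x <= y -> F y <= F x) ->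
  deriv_Rplus F x l -> l <= 0.
Proof.
  intros Hx Hd HD. destruct (Rle_or_lt l 0) as [|Hl]; auto. exfalso.
  destruct (HD l Hl) as [dl [Hdl H]].
  specialize (H (x + dl / 2) ltac:(lra) ltac:(lra)).
  replace (x + dl / 2 - x) with (dl / 2) in H by ring.
  rewrite Rabs_right in H by lra. specialize (H ltac:(lra)).
  specialize (Hd (x + dl / 2) ltac:(lra)).
  assert ((F (x + dl / 2) - F x) / (dl / 2) <= 0).
  { unfold Rdiv. apply Rmult_le_0_r; [lra|]. left; apply Rinv_0_lt_compat; lra. }
  apply Rabs_def2 in H. lra.
Qed.

Lemma sol_decr (g g1 : R -> R) : (forall x, 0 <= x -> deriv_Rplus g x (g1 x)) ->
  (forall x l, 0 < x -> deriv_Rplus g x l -> l <= 0) ->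
  forall x, 0 <= x -> g x <= g 0.
Proof.
  intros HD HN x Hx. destruct (Rle_or_lt (g x) (g 0)) as [|Hgt]; auto. exfalso.
  assert (Hx0 : 0 < x) by (destruct Hx as [|<-]; auto; lra).
  destruct (dR_cont g 0 (g1 0) (HD 0 (Rle_refl 0)) (g x - g 0) ltac:(lra)) as [eta [Heta Hc]].
  set (e0 := Rmin (eta / 2) (x / 2)).
  assert (He0 : 0 < e0 /\ e0 < eta /\ e0 < x).
  { unfold e0. pose proof (Rmin_l (eta/2) (x/2)). pose proof (Rmin_r (eta/2) (x/2)).
    assert (0 < Rmin (eta/2) (x/2)) by (apply Rmin_pos; lra). lra. }
  assert (Hge : g e0 < g x).
  { assert (Rabs (e0 - 0) < eta) by (rewrite Rminus_0_r, Rabs_right; lra).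
    specialize (Hc e0 ltac:(lra) H). apply Rabs_def2 in Hc. lra. }
  destruct (MVT_cor2 g g1 e0 x ltac:(lra)) as [c [Hm Hcc]].
  { intros c Hc'. apply dR_to_dpl; [lra|]. apply HD. lra. }
  assert (g1 c <= 0) by (apply (HN c); [lra|apply HD; lra]).
  assert (g1 c * (x - e0) <= 0) by (apply Rmult_le_0_r; lra).
  lra.
Qed.

Theorem lemma3 (mu_xi mu_rho s_xi s_rho delta : R) :
  0 < s_xi -> 0 < s_rho -> 0 < delta ->
  exists f : R -> R,
    is_solution mu_xi mu_rho s_xi s_rho delta f /\ propP f /\
    (mu_rho <= 0 ->
      forall g : R -> R,
        is_solution mu_xi mu_rho s_xi s_rho delta g -> propP g ->
        exists K : R, 0 < K /\ forall x : R, 0 <= x -> g x = K * f x).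
Proof.
  intros Hsx Hsr Hdel.
  set (b := s_rho ^ 2).
  assert (Hb : 0 < b) by (unfold b; apply pow_lt; auto).
  set (S := sqrt (mu_rho ^ 2 + 2 * b * delta)).
  assert (HS2 : S * S = mu_rho ^ 2 + 2 * b * delta).
  { unfold S. apply sqrt_sqrt. pose proof (pow2_ge_0 mu_rho). assert (0 < b * delta) by (apply Rmult_lt_0_compat; auto). lra. }
  assert (HS0 : 0 <= S) by (unfold S; apply sqrt_pos).
  assert (HSmu : mu_rho < S /\ - mu_rho < S).
  { assert (0 < b * delta) by (apply Rmult_lt_0_compat; auto). split; nra. }
  set (p := (S - mu_rho) / b).
  set (P := mkprm s_xi s_rho mu_xi mu_rho p).
  assert (HP : ok P).
  { unfold ok, bet, qB; unfold P; cbn [psx psr pc pmu pp]. repeat split; auto.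
    - unfold p. apply Rdiv_lt_0_compat; lra.
    - fold b. unfold p. replace ((2 * ((S - mu_rho) / b) * b + 2 * mu_rho + b) / b - (S - mu_rho) / b - 1) with ((S + mu_rho) / b) by (field; lra).
      apply Rdiv_lt_0_compat; lra. }
  assert (Hdd : ddl P = 2 * delta).
  { unfold ddl; unfold P; cbn [psx psr pc pmu pp]. fold b. unfold p.
    apply Rmult_eq_reg_l with b; [|lra].
    replace (b * (b * ((S - mu_rho) / b) ^ 2 + 2 * mu_rho * ((S - mu_rho) / b))) with (S * S - mu_rho ^ 2) by (field; lra).
    rewrite HS2. ring. }
  destruct (all_bounds P HP) as [K [Kb [Cg [HK [HKb [HCg [B0 [B1 [B2 [B3 _]]]]]]]]]].
  pose proof HP as [_ [_ [Hp Hbe]]].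
  set (f := Y (pp P) (gf P)). set (f1 := Y (pp P) (g1 P)). set (f2 := Y (pp P) (g2 P)).
  assert (Dg0 : forall t, is_derive (gf P) t (g1 P t)) by (intros; apply gf_der; auto).
  assert (Dg1 : forall t, is_derive (g1 P) t (g2 P t)) by (intros; apply g1_der; auto).
  assert (Dg2 : forall t, is_derive (g2 P) t (g3 P t)) by (intros; apply g2_der; auto).
  assert (Hsol : forall x, 0 <= x ->
     deriv_Rplus f x (f1 x) /\ deriv_Rplus f1 x (f2 x) /\
     (s_xi ^ 2 + s_rho ^ 2 * x ^ 2) * f2 x + 2 * (mu_xi + (mu_rho + s_rho ^ 2 / 2) * x) * f1 x - 2 * delta * f x = 0).
  { intros x Hx. split; [|split].
    - apply (Y_der (pp P) (bet P) (gf P) (g1 P) (g2 P) K); auto.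
    - apply (Y_der (pp P) (bet P) (g1 P) (g2 P) (g3 P) K); auto.
    - pose proof (ode_holds P x HP Hx) as E. rewrite Hdd in E.
      assert (Esg : sg P x = s_xi ^ 2 + s_rho ^ 2 * x ^ 2) by reflexivity.
      assert (Etx : taux P x = 2 * mu_xi + (2 * mu_rho + s_rho ^ 2) * x) by reflexivity.
      rewrite Esg, Etx in E. unfold f, f1, f2.
      rewrite <- E. field. }
  assert (Hfpos : forall x, 0 <= x -> 0 < f x) by (intros; apply Y_pos; auto).
  assert (Hfdec : forall x y, 0 <= x <= y -> f y <= f x) by (intros; apply Y_decr; auto).
  exists f. split; [|split].
  - exists f1, f2. exact Hsol.
  - split; auto. intros x l Hx HD. apply (decr_deriv_nonpos f x l Hx); auto.
    intros y Hy. apply Hfdec; lra.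
  - intros _ g [h1 [h2 Hg]] [Hgpos Hgneg].
    set (Kc := g 0 / f 0).
    assert (Hf0 : 0 < f 0) by (apply Hfpos; lra).
    assert (Hg0 : 0 < g 0) by (apply Hgpos; lra).
    assert (HKc : 0 < Kc) by (unfold Kc; apply Rdiv_lt_0_compat; auto).
    exists Kc. split; auto.
    assert (Hgdec : forall x, 0 <= x -> g x <= g 0).
    { apply (sol_decr g h1); auto. intros x Hx. apply Hg; auto. }
    set (W := fun t => 1 * g t + - Kc * f t).
    set (W1 := fun t => 1 * h1 t + - Kc * f1 t).
    set (W2 := fun t => 1 * h2 t + - Kc * f2 t).
    assert (HW : forall x, 0 <= x -> deriv_Rplus W x (W1 x) /\ deriv_Rplus W1 x (W2 x) /\
        (s_xi ^ 2 + s_rho ^ 2 * x ^ 2) * W2 x + 2 * (mu_xi + (mu_rho + s_rho ^ 2 / 2) * x) * W1 x - 2 * delta * W x = 0).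
    { intros x Hx. destruct (Hg x Hx) as [G1 [G2 G3]]. destruct (Hsol x Hx) as [F1 [F2 F3]].
      split; [|split].
      - apply dR_lin; auto.
      - apply dR_lin; auto.
      - unfold W, W1, W2.
        replace ((s_xi ^ 2 + s_rho ^ 2 * x ^ 2) * (1 * h2 x + - Kc * f2 x) +
                 2 * (mu_xi + (mu_rho + s_rho ^ 2 / 2) * x) * (1 * h1 x + - Kc * f1 x) -
                 2 * delta * (1 * g x + - Kc * f x))
          with (((s_xi ^ 2 + s_rho ^ 2 * x ^ 2) * h2 x + 2 * (mu_xi + (mu_rho + s_rho ^ 2 / 2) * x) * h1 x - 2 * delta * g x)
                - Kc * ((s_xi ^ 2 + s_rho ^ 2 * x ^ 2) * f2 x + 2 * (mu_xi + (mu_rho + s_rho ^ 2 / 2) * x) * f1 x - 2 * delta * f x)) by ring.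
        rewrite G3, F3. ring. }
    assert (HW0 : W 0 = 0) by (unfold W, Kc; field; lra).
    assert (Ha : 0 < s_xi ^ 2) by (apply pow_lt; auto).
    assert (Hb' : 0 <= s_rho ^ 2) by apply pow2_ge_0.
    assert (Hle1 : forall x, 0 <= x -> W x <= 0).
    { apply (maxp (s_xi ^ 2) (s_rho ^ 2) mu_xi (mu_rho + s_rho ^ 2 / 2) delta W W1 W2 (g 0)); auto.
      intros x Hx. unfold W. specialize (Hgdec x Hx). specialize (Hfpos x Hx).
      assert (0 < Kc * f x) by (apply Rmult_lt_0_compat; auto). lra. }
    set (V := fun t => -1 * W t + 0 * W t).
    assert (Hle2 : forall x, 0 <= x -> V x <= 0).
    { apply (maxp (s_xi ^ 2) (s_rho ^ 2) mu_xi (mu_rho + s_rho ^ 2 / 2) delta V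
               (fun t => -1 * W1 t + 0 * W1 t) (fun t => -1 * W2 t + 0 * W2 t) (Kc * f 0)); auto.
      - intros x Hx. destruct (HW x Hx) as [D1 [D2 D3]]. split; [|split].
        + apply dR_lin; auto.
        + apply dR_lin; auto.
        + replace ((s_xi ^ 2 + s_rho ^ 2 * x ^ 2) * (-1 * W2 x + 0 * W2 x) +
                   2 * (mu_xi + (mu_rho + s_rho ^ 2 / 2) * x) * (-1 * W1 x + 0 * W1 x) -
                   2 * delta * V x)
            with (- ((s_xi ^ 2 + s_rho ^ 2 * x ^ 2) * W2 x + 2 * (mu_xi + (mu_rho + s_rho ^ 2 / 2) * x) * W1 x - 2 * delta * W x))
            by (unfold V; ring).
          rewrite D3. ring.
      - unfold V. rewrite HW0. ring.
      - intros x Hx. unfold V, W. specialize (Hgpos x Hx).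
        assert (Kc * f x <= Kc * f 0) by (apply Rmult_le_compat_l; [lra|apply Hfdec; lra]). lra. }
    intros x Hx. specialize (Hle1 x Hx). specialize (Hle2 x Hx). unfold V in Hle2. unfold W in *. lra.
Qed.
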